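(* (Homotopy invariance of the $\mu$-invariant.) Let $F\colon[a,b]\times[0,1]\to\mathfrak S_1(\mathbb T)$ be continuous with $F(a,t)=\mathbf 1$ for all $t\in[0,1]$ and $F(b,t)=F_1$ for all $t\in[0,1]$, where $F_1\in\mathfrak S_1(\mathbb T)$ is fixed. Then the paths $F(\cdot,0)$ and $F(\cdot,1)$ have the same $\mu$-invariant: $\mu(\theta;F(\cdot,0))=\mu(\theta;F(\cdot,1))$ for all $\theta\in(0,2\pi)$.
   Context: Rigged sets: each point has a multiplicity in $\{0,1,\dots,\infty\}$; an enumeration lists each point according to its multiplicity. For a metric space $X$ with base point $x_0$, $\mathfrak S_1(X)$ is the set of countable rigged subsets of $X$ with $x_0$ of infinite multiplicity, no accumulation point other than $x_0$, and $d(S,\mathbf x_0)<\infty$, where $d(S,T)=\inf\sum_j\mathrm{dist}(s_j,t_j)$ over enumerations and $\mathbf x_0$ is $x_0$ with infinite multiplicity; $\mathfrak S_1(\mathbb T)$ has base point $1$ (arc-length metric), $\mathfrak S_1(\mathbb R)$ base point $0$; $\mathbf 1$ denotes $1$ with infinite multiplicity. $p\colon\mathfrak S_1(\mathbb R)\to\mathfrak S_1(\mathbb T)$ is induced by $\theta\mapsto e^{i\theta}$. For $\theta\in(0,2\pi)$ and $\theta_1<\theta_2$, $[\theta;\theta_1,\theta_2]=\frac12\big(\#\{k\in\mathbb Z:\theta_1<\theta+2\pi k<\theta_2\}+\#\{k\in\mathbb Z:\theta_1\le\theta+2\pi k\le\theta_2\}\big)$, $[\theta;\theta_1,\theta_2]=-[\theta;\theta_2,\theta_1]$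 if $\theta_2<\theta_1$, and $0$ if equal. The $\mu$-invariant of a continuous path $S\colon[a,b]\to\mathfrak S_1(\mathbb T)$ is $\mu(\theta;S)=\sum_j[\theta;\theta_j(a),\theta_j(b)]$, where $\tilde S\colon[a,b]\to\mathfrak S_1(\mathbb R)$ is a continuous lift ($p\circ\tilde S=S$) and $\theta_1,\theta_2,\dots$ are continuous real functions such that for each $r$, $\{\theta_j(r)\}$ (together with $0$ of infinite multiplicity) equals $\tilde S(r)$; it does not depend on these choices. *)

(* Defs.v *)
From Stdlib Require Import Reals Lra ZArith List ClassicalEpsilon.
From Coquelicot Require Import Coquelicot.
Open Scope R_scope.

Inductive mult : Type := Fin (n : nat) | Inf.

Definition rigged (X : Type) := X -> mult.

Definition finite_card {I : Type} (P : I -> Prop) (n : nat) : Prop :=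
  exists l : list I, NoDup l /\ length l = n /\ forall i, P i <-> In i l.

Definition has_mult (P : nat -> Prop) (m : mult) : Prop :=
  match m with
  | Fin n => finite_card P n
  | Inf => forall N : nat, exists j : nat, (N <= j)%nat /\ P j
  end.

Definition enumerates {X : Type} (S : rigged X) (e : nat -> X) : Prop :=
  forall x, has_mult (fun j => e j = x) (S x).

(** d(S,T) < eps, where d(S,T) = inf over enumerations of sum_j dist(s_j,t_j). *)
Definition rdist_lt {X : Type} (dist : X -> X -> R) (S T : rigged X) (eps : R) : Prop :=
  exists (s t : nat -> X), enumerates S s /\ enumerates T t /\
    ex_series (fun j => dist (s j) (t j)) /\
    Series (fun j => dist (s j) (t j)) < eps.

Definition accum {X : Type} (dist : X -> X -> R) (S : rigged X) (y : X) : Prop :=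
  forall eps, 0 < eps -> exists x, x <> y /\ dist x y < eps /\ S x <> Fin 0.

(** S belongs to S_1(X) (base point x0): countable (it has an enumeration),
    x0 of infinite multiplicity, no accumulation point other than x0, and
    d(S, x0^oo) < oo (the only enumeration of x0^oo is the constant one). *)
Definition in_S1 {X : Type} (dist : X -> X -> R) (x0 : X) (S : rigged X) : Prop :=
  S x0 = Inf /\
  (forall y, y <> x0 -> ~ accum dist S y) /\
  exists s : nat -> X, enumerates S s /\ ex_series (fun j => dist (s j) x0).

(** The unit circle with the arc-length metric. *)
Definition T : Type := {z : C | Cmod z = 1}.
Definition distT (z w : T) : R := 2 * asin (Cmod (proj1_sig z - proj1_sig w) / 2).
Definition oneT : T := exist _ (RtoC 1) Cmod_1.

Definition distR (x y : R) : R := Rabs (x - y).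

Definition is_base_rigged {X : Type} (x0 : X) (S : rigged X) : Prop :=
  S x0 = Inf /\ forall x, x <> x0 -> S x = Fin 0.

Definition rpath_cont {X : Type} (dist : X -> X -> R) (a b : R) (P : R -> rigged X) : Prop :=
  forall r0, a <= r0 <= b -> forall eps, 0 < eps -> exists delta, 0 < delta /\
    forall r, a <= r <= b -> Rabs (r - r0) < delta -> rdist_lt dist (P r) (P r0) eps.

Definition rhom_cont {X : Type} (dist : X -> X -> R) (a b : R) (F : R -> R -> rigged X) : Prop :=
  forall r0 t0, a <= r0 <= b -> 0 <= t0 <= 1 -> forall eps, 0 < eps ->
    exists delta, 0 < delta /\
    forall r t, a <= r <= b -> 0 <= t <= 1 -> Rabs (r - r0) < delta -> Rabs (t - t0) < delta ->
      rdist_lt dist (F r t) (F r0 t0) eps.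

Definition real_cont_on (a b : R) (f : R -> R) : Prop :=
  forall r0, a <= r0 <= b -> forall eps, 0 < eps -> exists delta, 0 < delta /\
    forall r, a <= r <= b -> Rabs (r - r0) < delta -> Rabs (f r - f r0) < eps.

(** p(St) = S, where p is induced by theta |-> e^{i theta}. *)
Definition proj_eq (St : rigged R) (S : rigged T) : Prop :=
  exists e : nat -> R, enumerates St e /\
    forall z : T, has_mult (fun j => (cos (e j), sin (e j)) = proj1_sig z) (S z).

(** Lifting data for mu: a continuous lift St of S into S_1(R) together with
    continuous functions th_j such that {th_j(r)} u 0^oo = St(r). *)
Definition mu_data (a b : R) (S : R -> rigged T) (St : R -> rigged R)
    (th : nat -> R -> R) : Prop :=
  (forall r, a <= r <= b -> in_S1 distR 0 (St r)) /\
  rpath_cont distR a b St /\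
  (forall r, a <= r <= b -> proj_eq (St r) (S r)) /\
  (forall j, real_cont_on a b (th j)) /\
  (forall r, a <= r <= b ->
     St r 0 = Inf /\
     forall x, x <> 0 -> has_mult (fun j => th j r = x) (St r x)).

Definition zcard (P : Z -> Prop) : nat :=
  epsilon (inhabits 0%nat) (fun n => finite_card P n).

Definition bracket (theta th1 th2 : R) : R :=
  let half x y :=
    (INR (zcard (fun k => x < theta + 2 * PI * IZR k < y)) +
     INR (zcard (fun k => x <= theta + 2 * PI * IZR k <= y))) / 2 in
  match Rlt_dec th1 th2 with
  | left _ => half th1 th2
  | right _ => match Rlt_dec th2 th1 with
               | left _ => - half th2 th1
               | right _ => 0
               end
  end.

Definition mu_sum (a b theta : R) (th : nat -> R -> R) : R :=
  Series (fun j => bracket theta (th j a) (th j b)).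

(* Main.v *)
Require Import Defs.
From Stdlib Require Import Reals Lra Lia ZArith List ClassicalEpsilon Classical ProofIrrelevance.
From Coquelicot Require Import Coquelicot.
Open Scope R_scope.


Fixpoint psum (h : nat -> R) (n : nat) : R :=
  match n with O => 0 | S n => psum h n + h n end.

Definition FS (h : nat -> R) (v : R) : Prop :=
  exists N, (forall j, (N <= j)%nat -> h j = 0) /\ v = psum h N.

Lemma psum_ext h g n : (forall j, (j < n)%nat -> h j = g j) -> psum h n = psum g n.
Proof. induction n; simpl; intros H; auto. rewrite IHn by (intros; apply H; lia). rewrite H by lia; auto. Qed.

Lemma psum_stable h N M : (forall j, (N<=j)%nat -> h j = 0) -> (N <= M)%nat -> psum h M = psum h N.
Proof. intros H HM; induction HM; simpl; auto. rewrite IHHM, H by lia; ring. Qed.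

Lemma FS_unique h v w : FS h v -> FS h w -> v = w.
Proof.
  intros [N1 [H1 ->]] [N2 [H2 ->]].
  destruct (Nat.le_ge_cases N1 N2).
  - symmetry; apply psum_stable; auto.
  - apply psum_stable; auto.
Qed.

Lemma psum_plus h g n : psum (fun j => h j + g j) n = psum h n + psum g n.
Proof. induction n; simpl; [ring|rewrite IHn; ring]. Qed.
Lemma psum_minus h g n : psum (fun j => h j - g j) n = psum h n - psum g n.
Proof. induction n; simpl; [ring|rewrite IHn; ring]. Qed.
Lemma psum_scal c h n : psum (fun j => c * h j) n = c * psum h n.
Proof. induction n; simpl; [ring|rewrite IHn; ring]. Qed.
Lemma psum_zero n : psum (fun _ => 0) n = 0.
Proof. induction n; simpl; [ring|rewrite IHn; ring]. Qed.
Lemma psum_swap (h : nat -> nat -> R) n m :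
  psum (fun i => psum (fun j => h i j) m) n = psum (fun j => psum (fun i => h i j) n) m.
Proof.
  induction n; simpl.
  - rewrite psum_zero; auto.
  - rewrite IHn, <- psum_plus; auto.
Qed.
Lemma psum_le h g n : (forall j, (j<n)%nat -> h j <= g j) -> psum h n <= psum g n.
Proof. induction n; simpl; intros H; [lra|]. specialize (IHn (fun j Hj => H j ltac:(lia))). specialize (H n ltac:(lia)). lra. Qed.
Lemma psum_nonneg h n : (forall j, 0 <= h j) -> 0 <= psum h n.
Proof. intros H; induction n; simpl; [lra|]. specialize (H n); lra. Qed.
Lemma psum_abs h n : Rabs (psum h n) <= psum (fun j => Rabs (h j)) n.
Proof. induction n; simpl. rewrite Rabs_R0; lra. eapply Rle_trans. apply Rabs_triang. lra. Qed.
Lemma psum_tele (f : nat -> R) n : psum (fun i => f (S i) - f i) n = f n - f O.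
Proof. induction n; simpl; [ring|rewrite IHn; ring]. Qed.

Lemma sum_f_psum h n : sum_f_R0 h n = psum h (S n).
Proof. induction n; simpl; [ring|]. simpl in IHn. rewrite IHn. ring. Qed.

Lemma Series_fin h N : (forall j, (N <= j)%nat -> h j = 0) -> Series h = psum h N.
Proof.
  intros H. unfold Series.
  rewrite (Lim_seq_ext_loc _ (fun _ => psum h N)).
  - rewrite Lim_seq_const; auto.
  - exists N. intros n Hn. rewrite sum_n_Reals, sum_f_psum. apply psum_stable; auto.
Qed.

Lemma Series_nonneg h : (forall j, 0 <= h j) -> ex_series h -> 0 <= Series h.
Proof.
  intros Hp Hex.
  assert (E : Series (fun _ => 0) = 0) by (apply (Series_fin _ O); auto).
  rewrite <- E. apply Series_le; auto. intros; split; [lra|auto].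
Qed.

Lemma psum_le_Series h N : (forall j, 0 <= h j) -> ex_series h -> psum h N <= Series h.
Proof.
  intros Hp Hex. destruct N as [|N]. simpl. apply Series_nonneg; auto.
  rewrite (Series_incr_n h (S N)) by (auto; lia). simpl Init.Nat.pred.
  rewrite sum_f_psum.
  assert (0 <= Series (fun k => h (S N + k)%nat)).
  { apply Series_nonneg; auto. apply (ex_series_incr_n h (S N)) in Hex. exact Hex. }
  lra.
Qed.

Definition ind (P : Prop) : R := if excluded_middle_informative P then 1 else 0.
Definition cnt (P : nat -> Prop) (N : nat) : R := psum (fun j => ind (P j)) N.

Lemma cnt_list (l : list nat) N : NoDup l -> (forall x, In x l -> (x < N)%nat) ->
  INR (length l) = cnt (fun j => In j l) N.
Proof.
  induction l as [|x l IH]; intros Hnd Hb.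
  - simpl. unfold cnt. rewrite <- (psum_zero N). apply psum_ext; intros. unfold ind.
    destruct excluded_middle_informative; tauto.
  - inversion Hnd; subst.
    change (length (x :: l)) with (S (length l)).
    rewrite S_INR, IH by (auto; intros; apply Hb; simpl; auto).
    unfold cnt.
    assert (psum (fun j => ind (x = j \/ In j l)) N = psum (fun j => ind (In j l)) N + psum (fun j => ind (j = x)) N).
    { rewrite <- psum_plus. apply psum_ext; intros. unfold ind.
      repeat destruct excluded_middle_informative; try lra; exfalso;
      match goal with H2 : ~ In x l |- _ => intuition (subst; auto) end. }
    simpl In; rewrite H. assert (psum (fun j => ind (j = x)) N = 1).
    { assert (Hx : (x < N)%nat) by (apply Hb; simpl; auto).
      clear -Hx. induction N; [lia|]. simpl. destruct (Nat.eq_dec N x).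
      - subst. rewrite (psum_ext _ (fun _ => 0)). rewrite psum_zero. unfold ind.
        destruct excluded_middle_informative; [lra|tauto].
        intros; unfold ind; destruct excluded_middle_informative; [lia|auto].
      - rewrite IHN by lia. unfold ind. destruct excluded_middle_informative; [lia|lra]. }
    lra.
Qed.

Lemma cnt_ext P Q N : (forall j, P j <-> Q j) -> cnt P N = cnt Q N.
Proof. intros H; unfold cnt; apply psum_ext; intros; unfold ind.
  repeat destruct excluded_middle_informative; firstorder. Qed.

Lemma mult_cnt P m N : has_mult P (Fin m) -> (forall j, P j -> (j < N)%nat) -> INR m = cnt P N.
Proof.
  intros [l [Hnd [Hlen Hiff]]] Hb. subst m.
  rewrite (cnt_list l N Hnd). apply cnt_ext. intros; symmetry; apply Hiff.
  intros x Hx; apply Hb, Hiff, Hx.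
Qed.

Lemma list_bound (l : list nat) : exists B, forall x, In x l -> (x < B)%nat.
Proof.
  induction l as [|y l [B HB]]. exists O; simpl; tauto.
  exists (Nat.max (S y) B). intros x [->|Hx]; [lia|]. specialize (HB x Hx); lia.
Qed.

Lemma has_mult_iff P Q m : (forall j, P j <-> Q j) -> has_mult P m -> has_mult Q m.
Proof.
  destruct m; simpl.
  - intros H [l [? [? Hl]]]. exists l; repeat split; auto; intros; [apply Hl, H|apply H, Hl]; auto.
  - intros H Hm N. destruct (Hm N) as [j [? ?]]. exists j; split; auto; apply H; auto.
Qed.

Lemma has_mult_nz P m j : has_mult P m -> P j -> m <> Fin 0.
Proof.
  intros Hm Hj ->. destruct Hm as [l [_ [Hl Hiff]]]. apply Hiff in Hj. destruct l; simpl in *; [tauto|lia].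
Qed.

Lemma has_mult_ex P m : has_mult P m -> m <> Fin 0 -> exists j, P j.
Proof.
  destruct m; simpl.
  - intros [l [_ [Hl Hiff]]] Hn. destruct l as [|x l]. simpl in Hl; subst; tauto.
    exists x; apply Hiff; simpl; auto.
  - intros H _. destruct (H O) as [j [_ ?]]; eauto.
Qed.


Lemma tail_small {X : Type} (dist : X -> X -> R) x0 (s : nat -> X) c :
  (forall x y, 0 <= dist x y) -> ex_series (fun j => dist (s j) x0) -> 0 < c ->
  exists N, forall j, (N <= j)%nat -> dist (s j) x0 < c.
Proof.
  intros Hd Hex Hc. apply ex_series_lim_0 in Hex. apply is_lim_seq_spec in Hex.
  destruct (Hex (mkposreal c Hc)) as [N HN]. exists N. intros j Hj. specialize (HN j Hj). simpl in HN.
  rewrite Rminus_0_r, Rabs_pos_eq in HN by auto. auto.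
Qed.

Lemma fin_mult {X : Type} (dist : X -> X -> R) x0 (S : rigged X) s c N :
  enumerates S s -> (forall j, (N <= j)%nat -> dist (s j) x0 < c) ->
  forall x, c <= dist x x0 -> exists m, S x = Fin m /\ forall j, s j = x -> (j < N)%nat.
Proof.
  intros Hs HN x Hx. specialize (Hs x). destruct (S x) as [m|] eqn:E.
  - exists m; split; auto. intros j Hj. destruct (Nat.lt_ge_cases j N); auto.
    specialize (HN j H); subst; lra.
  - destruct (Hs N) as [j [Hj Hj']]. specialize (HN j Hj). subst; lra.
Qed.

Lemma supp_bound {X : Type} (dist : X -> X -> R) x0 (S : rigged X) s c N (u : nat -> X) :
  enumerates S s -> (forall j, (N <= j)%nat -> dist (s j) x0 < c) ->
  (forall x, c <= dist x x0 -> has_mult (fun j => u j = x) (S x)) ->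
  exists B, forall j, (B <= j)%nat -> dist (u j) x0 < c.
Proof.
  intros Hs HN Hu.
  assert (HB : forall M, exists B, forall i, (i < M)%nat -> c <= dist (s i) x0 ->
            forall j, u j = s i -> (j < B)%nat).
  { induction M as [|M [B HB]].
    - exists O; intros; lia.
    - destruct (Rle_lt_dec c (dist (s M) x0)) as [Hc|Hc].
      + destruct (fin_mult dist x0 S s c N Hs HN (s M) Hc) as [m [Em _]].
        pose proof (Hu (s M) Hc) as Hm. rewrite Em in Hm.
        destruct Hm as [l [_ [_ Hl]]]. destruct (list_bound l) as [B' HB'].
        exists (Nat.max B B'). intros i Hi Hci j Hj.
        destruct (Nat.eq_dec i M).
        * subst. assert (j < B')%nat by (apply HB', Hl; auto). lia.
        * assert (j < B)%nat by (apply (HB i); auto; lia). lia.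
      + exists B. intros i Hi Hci j Hj. destruct (Nat.eq_dec i M). subst; lra.
        apply (HB i); auto; lia. }
  destruct (HB N) as [B HB']. exists B. intros j Hj.
  destruct (Rlt_le_dec (dist (u j) x0) c) as [|Hc]; auto. exfalso.
  destruct (fin_mult dist x0 S s c N Hs HN (u j) Hc) as [m [Em Hlt]].
  pose proof (Hu (u j) Hc) as Hm. rewrite Em in Hm.
  assert (Hnz : Fin m <> Fin 0) by (apply (has_mult_nz _ _ j Hm); reflexivity).
  pose proof (Hs (u j)) as Hsm. rewrite Em in Hsm.
  destruct (has_mult_ex _ _ Hsm Hnz) as [i Hi].
  assert (i < N)%nat by (apply Hlt; auto).
  assert (j < B)%nat by (apply (HB' i); auto; rewrite Hi; auto). lia.
Qed.

Lemma same_sum {X : Type} (dist : X -> X -> R) x0 (S : rigged X) s c N (f : X -> R) (u w : nat -> X) :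
  enumerates S s -> (forall j, (N <= j)%nat -> dist (s j) x0 < c) ->
  (forall x, f x <> 0 -> c <= dist x x0) ->
  (forall x, c <= dist x x0 -> has_mult (fun j => u j = x) (S x)) ->
  (forall x, c <= dist x x0 -> has_mult (fun j => w j = x) (S x)) ->
  exists M, (forall j, (M <= j)%nat -> f (u j) = 0 /\ f (w j) = 0) /\
    psum (fun j => f (u j)) M = psum (fun j => f (w j)) M.
Proof.
  intros Hs HN Hf Hu Hw.
  destruct (supp_bound dist x0 S s c N u Hs HN Hu) as [B1 HB1].
  destruct (supp_bound dist x0 S s c N w Hs HN Hw) as [B2 HB2].
  set (M := Nat.max B1 B2).
  assert (Zu : forall j, (M <= j)%nat -> f (u j) = 0).
  { intros j Hj. destruct (Req_dec (f (u j)) 0) as [|Hne]; auto. apply Hf in Hne.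
    specialize (HB1 j ltac:(lia)). lra. }
  assert (Zw : forall j, (M <= j)%nat -> f (w j) = 0).
  { intros j Hj. destruct (Req_dec (f (w j)) 0) as [|Hne]; auto. apply Hf in Hne.
    specialize (HB2 j ltac:(lia)). lra. }
  exists M; split; [intros; split; auto|].
  assert (Hm : forall x, f x <> 0 -> exists m, (m <> 0)%nat \/ True /\ False \/ True ->
     True) by (intros; exists O; auto).
  clear Hm.
  assert (Kc : forall x, f x <> 0 -> exists m,
     cnt (fun k => u k = x) M = INR m /\ cnt (fun k => w k = x) M = INR m).
  { intros x Hx. pose proof (Hf x Hx) as Hc.
    destruct (fin_mult dist x0 S s c N Hs HN x Hc) as [m [Em _]].
    exists m. pose proof (Hu x Hc) as H1. pose proof (Hw x Hc) as H2. rewrite Em in H1, H2.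
    split; symmetry; apply mult_cnt; auto; intros j Hj; destruct (Nat.lt_ge_cases j M); auto.
    - rewrite <- Hj, Zu in Hx by auto. tauto.
    - rewrite <- Hj, Zw in Hx by auto. tauto. }
  set (cw := fun x => cnt (fun k => w k = x) M).
  set (H := fun j k => ind (w k = u j) * (f (u j) / cw (u j))).
  transitivity (psum (fun j => psum (fun k => H j k) M) M).
  - apply psum_ext; intros j _. unfold H.
    rewrite (psum_ext _ (fun k => (f (u j) / cw (u j)) * ind (w k = u j))) by (intros; ring).
    rewrite psum_scal. fold (cnt (fun k => w k = u j) M). fold (cw (u j)).
    destruct (Req_dec (f (u j)) 0) as [E|Hne]. rewrite E; unfold Rdiv; ring.
    destruct (Kc _ Hne) as [m [E1 E2]]. unfold cw; rewrite E2.
    assert (INR m <> 0).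
    { rewrite <- E1. intro E0. 
      assert (Hle : ind (u j = u j) <= cnt (fun k => u k = u j) M).
      { unfold cnt. destruct (Nat.lt_ge_cases j M) as [Hj|Hj].
        - clear -Hj. induction M; [lia|]. simpl. destruct (Nat.eq_dec j M).
          + subst. assert (0 <= psum (fun j0 => ind (u j0 = u M)) M).
            { apply psum_nonneg; intros; unfold ind; destruct excluded_middle_informative; lra. }
            lra.
          + assert (0 <= ind (u M = u j)) by (unfold ind; destruct excluded_middle_informative; lra).
            specialize (IHM ltac:(lia)); lra.
        - exfalso; apply Hne, Zu, Hj. }
      unfold ind in Hle. destruct excluded_middle_informative; [lra|tauto]. }
    field; auto.
  - rewrite psum_swap. apply psum_ext; intros k _. unfold H.
    rewrite (psum_ext _ (fun j => (f (w k) / cw (w k)) * ind (u j = w k))).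
    2:{ intros j _. unfold ind. repeat destruct excluded_middle_informative;
        [rewrite e; ring | exfalso; congruence | exfalso; congruence | ring]. }
    rewrite psum_scal. fold (cnt (fun j => u j = w k) M).
    destruct (Req_dec (f (w k)) 0) as [E|Hne]. rewrite E; unfold Rdiv; ring.
    destruct (Kc _ Hne) as [m [E1 E2]]. unfold cw; rewrite E1, E2.
    assert (INR m <> 0).
    { rewrite <- E2. intro E0.
      assert (Hle : ind (w k = w k) <= cnt (fun j => w j = w k) M).
      { unfold cnt. destruct (Nat.lt_ge_cases k M) as [Hj|Hj].
        - clear -Hj. induction M; [lia|]. simpl. destruct (Nat.eq_dec k M).
          + subst. assert (0 <= psum (fun j0 => ind (w j0 = w M)) M).
            { apply psum_nonneg; intros; unfold ind; destruct excluded_middle_informative; lra. }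
            lra.
          + assert (0 <= ind (w M = w k)) by (unfold ind; destruct excluded_middle_informative; lra).
            specialize (IHM ltac:(lia)); lra.
        - exfalso; apply Hne, Zw, Hj. }
      unfold ind in Hle. destruct excluded_middle_informative; [lra|tauto]. }
    field; auto.
Qed.

Definition cmatch {X : Type} (dist : X -> X -> R) x0 (S : rigged X) c (u : nat -> X) :=
  forall x, c <= dist x x0 -> has_mult (fun j => u j = x) (S x).

Lemma FS_transfer {X : Type} (dist : X -> X -> R) x0 (S : rigged X) c (f : X -> R) (u w : nat -> X) v :
  (forall x y, 0 <= dist x y) -> in_S1 dist x0 S -> 0 < c ->
  (forall x, f x <> 0 -> c <= dist x x0) ->
  cmatch dist x0 S c u -> cmatch dist x0 S c w ->
  FS (fun j => f (u j)) v -> FS (fun j => f (w j)) v.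
Proof.
  intros Hd [_ [_ [s [Hs Hex]]]] Hc Hf Hu Hw [N1 [HN1 ->]].
  destruct (tail_small dist x0 s c Hd Hex Hc) as [N HN].
  destruct (same_sum dist x0 S s c N f u w Hs HN Hf Hu Hw) as [M [HM E]].
  exists M; split; [intros j Hj; apply HM; auto|].
  rewrite <- E.
  rewrite <- (psum_stable (fun j => f (u j)) N1 (Nat.max N1 M)) by (auto; lia).
  apply psum_stable; [intros; apply HM; auto|lia].
Qed.

Lemma FS_exists {X : Type} (dist : X -> X -> R) x0 (S : rigged X) c (f : X -> R) (u : nat -> X) :
  (forall x y, 0 <= dist x y) -> in_S1 dist x0 S -> 0 < c ->
  (forall x, f x <> 0 -> c <= dist x x0) ->
  cmatch dist x0 S c u -> exists v, FS (fun j => f (u j)) v.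
Proof.
  intros Hd [_ [_ [s [Hs Hex]]]] Hc Hf Hu.
  destruct (tail_small dist x0 s c Hd Hex Hc) as [N HN].
  destruct (supp_bound dist x0 S s c N u Hs HN Hu) as [B HB].
  exists (psum (fun j => f (u j)) B), B; split; auto.
  intros j Hj. destruct (Req_dec (f (u j)) 0) as [|Hne]; auto. apply Hf in Hne.
  specialize (HB j Hj); lra.
Qed.

Lemma enum_cmatch {X : Type} (dist : X -> X -> R) x0 (S : rigged X) c (u : nat -> X) :
  enumerates S u -> cmatch dist x0 S c u.
Proof. intros H x _; apply H. Qed.


Lemma fl_spec x : IZR (Int_part x) <= x < IZR (Int_part x) + 1.
Proof. destruct (base_Int_part x); lra. Qed.

Lemma fl_unique x k : IZR k <= x < IZR k + 1 -> Int_part x = k.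
Proof. intros H. symmetry. apply Int_part_spec. lra. Qed.

Lemma IZR_nz_ge1 n : n <> 0%Z -> 1 <= Rabs (IZR n).
Proof.
  intros H. destruct (Z.lt_ge_cases n 0).
  - assert (IZR n <= -1) by (apply IZR_le; lia). rewrite Rabs_left by lra; lra.
  - assert (1 <= IZR n) by (apply IZR_le; lia). rewrite Rabs_pos_eq by lra; lra.
Qed.

Lemma IZR_lt_le m n : (m < n)%Z -> IZR m + 1 <= IZR n.
Proof. intros H. rewrite <- plus_IZR. apply IZR_le; lia. Qed.

Lemma IZR_lt_real_lt m n : IZR m < IZR n + 1 -> (m <= n)%Z.
Proof. intros H. rewrite <- plus_IZR in H. apply lt_IZR in H. lia. Qed.

Definition Z2pi (u : R) : Prop := exists m : Z, u = 2 * PI * IZR m.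

Lemma Z2pi_0 : Z2pi 0.
Proof. exists 0%Z; simpl; ring. Qed.
Lemma Z2pi_plus u v : Z2pi u -> Z2pi v -> Z2pi (u + v).
Proof. intros [m ->] [n ->]. exists (m + n)%Z. rewrite plus_IZR; ring. Qed.
Lemma Z2pi_opp u : Z2pi u -> Z2pi (- u).
Proof. intros [m ->]. exists (- m)%Z. rewrite opp_IZR; ring. Qed.
Lemma Z2pi_minus u v : Z2pi u -> Z2pi v -> Z2pi (u - v).
Proof. intros. apply Z2pi_plus; auto. apply Z2pi_opp; auto. Qed.
Lemma Z2pi_psum h n : (forall j, Z2pi (h j)) -> Z2pi (psum h n).
Proof. intros H; induction n; simpl. apply Z2pi_0. apply Z2pi_plus; auto. Qed.

Lemma Z2pi_small x : Z2pi x -> Rabs x < 2 * PI -> x = 0.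
Proof.
  intros [m ->] H. destruct (Z.eq_dec m 0). subst; simpl; ring.
  exfalso. apply IZR_nz_ge1 in n. rewrite Rabs_mult, (Rabs_pos_eq (2*PI)) in H by (pose proof PI_RGT_0; lra).
  pose proof PI_RGT_0. nra.
Qed.

Definition red (u : R) : R := u - 2 * PI * IZR (Int_part (u / (2 * PI) + / 2)).

Lemma red_range u : - PI <= red u < PI.
Proof.
  unfold red. pose proof PI_RGT_0. destruct (fl_spec (u / (2 * PI) + / 2)) as [H1 H2].
  set (k := IZR (Int_part (u / (2 * PI) + / 2))) in *. set (w := u / (2 * PI)) in *.
  assert (Hu : u = 2 * PI * w) by (unfold w; field; apply PI_neq0). rewrite Hu.
  replace (2 * PI * w - 2 * PI * k) with (2 * PI * (w - k)) by ring.
  split.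
  - replace (- PI) with (2 * PI * (- / 2)) by field. apply Rmult_le_compat_l; lra.
  - replace PI with (2 * PI * (/ 2)) at 2 by field. apply Rmult_lt_compat_l; lra.
Qed.

Lemma red_Z u : Z2pi (u - red u).
Proof. unfold red. exists (Int_part (u / (2 * PI) + / 2)); ring. Qed.

Lemma red_char u k : - PI <= u - 2 * PI * IZR k < PI -> red u = u - 2 * PI * IZR k.
Proof.
  intros H. unfold red. pose proof PI_RGT_0.
  rewrite (fl_unique _ k); auto.
  set (w := u / (2 * PI)).
  assert (Hu : u = 2 * PI * w) by (unfold w; field; apply PI_neq0). rewrite Hu in H.
  replace (2 * PI * w - 2 * PI * IZR k) with (2 * PI * (w - IZR k)) in H by ring.
  split.
  - apply Rmult_le_reg_l with (2 * PI); [lra|]. lra.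
  - apply Rmult_lt_reg_l with (2 * PI); [lra|]. lra.
Qed.

Lemma red_shift u v : Z2pi (u - v) -> red u = red v.
Proof.
  intros [m Hm]. pose proof (red_range v). destruct (red_Z v) as [k Hk].
  rewrite (red_char u (m + k)). 2:{ rewrite plus_IZR. lra. }
  rewrite plus_IZR; lra.
Qed.

Lemma red_small u v : Z2pi (u - v) -> - PI <= v < PI -> red u = v.
Proof.
  intros [m Hm] Hv. rewrite (red_char u m) by lra. lra.
Qed.

Lemma red_min u k : Rabs (red u) <= Rabs (u - 2 * PI * IZR k).
Proof.
  pose proof (red_range u). destruct (red_Z u) as [k0 Hk0]. pose proof PI_RGT_0.
  replace (u - 2 * PI * IZR k) with (red u + 2 * PI * IZR (k0 - k)) by (rewrite minus_IZR; lra).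
  destruct (Z.eq_dec (k0 - k) 0) as [E|E]. rewrite E; simpl; rewrite Rmult_0_r, Rplus_0_r; lra.
  apply IZR_nz_ge1 in E. set (n := IZR (k0 - k)) in *.
  assert (Rabs (red u) <= PI) by (apply Rabs_le; lra).
  assert (Rabs (2 * PI * n) >= 2 * PI) by (rewrite Rabs_mult, (Rabs_pos_eq (2*PI)) by lra; nra).
  pose proof (Rabs_triang_inv (2 * PI * n) (- red u)). rewrite Rabs_Ropp in H3.
  replace (2 * PI * n - - red u) with (red u + 2 * PI * n) in H3 by ring. lra.
Qed.

Lemma red_le u : Rabs (red u) <= Rabs u.
Proof. pose proof (red_min u 0). simpl in H. rewrite Rmult_0_r, Rminus_0_r in H; auto. Qed.

Lemma red_tri u v : Rabs (red (u + v)) <= Rabs (red u) + Rabs (red v).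
Proof.
  destruct (red_Z u) as [a Ha]. destruct (red_Z v) as [b Hb].
  eapply Rle_trans. apply (red_min (u + v) (a + b)).
  rewrite plus_IZR. replace (u + v - 2 * PI * (IZR a + IZR b)) with (red u + red v) by lra.
  apply Rabs_triang.
Qed.

Lemma red_opp u : Rabs (red (- u)) = Rabs (red u).
Proof.
  destruct (red_Z u) as [a Ha]. destruct (red_Z (-u)) as [b Hb].
  apply Rle_antisym.
  - eapply Rle_trans. apply (red_min (- u) (- a)). rewrite opp_IZR.
    replace (- u - 2 * PI * - IZR a) with (- red u) by lra. rewrite Rabs_Ropp; lra.
  - eapply Rle_trans. apply (red_min u (- b)). rewrite opp_IZR.
    replace (u - 2 * PI * - IZR b) with (- red (-u)) by lra. rewrite Rabs_Ropp; lra.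
Qed.

Lemma red_psum h n : Rabs (red (psum h n)) <= psum (fun j => Rabs (red (h j))) n.
Proof.
  induction n; simpl.
  - rewrite (red_small 0 0); [rewrite Rabs_R0; lra| |].
    replace (0 - 0) with 0 by ring; apply Z2pi_0. pose proof PI_RGT_0; lra.
  - eapply Rle_trans. apply red_tri. lra.
Qed.

Lemma red_zero : red 0 = 0.
Proof. apply red_small. replace (0-0) with 0 by ring; apply Z2pi_0. pose proof PI_RGT_0; lra. Qed.


Definition psi (et z : R) : R :=
  IZR (Int_part z) + Rmin 1 ((z - IZR (Int_part z)) * (PI / et)).

Definition nu (th et x : R) : R := psi et ((x - th + et) / (2 * PI)).

Lemma Int_part_shift z k : Int_part (z + IZR k) = (Int_part z + k)%Z.
Proof. apply fl_unique. rewrite plus_IZR. pose proof (fl_spec z); lra. Qed.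

Lemma psi_shift et z k : psi et (z + IZR k) = psi et z + IZR k.
Proof.
  unfold psi. rewrite Int_part_shift, plus_IZR.
  replace (z + IZR k - (IZR (Int_part z) + IZR k)) with (z - IZR (Int_part z)) by ring. ring.
Qed.

Lemma Int_part_mono z1 z2 : z1 <= z2 -> (Int_part z1 <= Int_part z2)%Z.
Proof.
  intros H. destruct (Z.le_gt_cases (Int_part z1) (Int_part z2)); auto.
  pose proof (fl_spec z1). pose proof (fl_spec z2).
  apply IZR_lt_le in H0. lra.
Qed.

Lemma psi_mono_lip et z1 z2 : 0 < et <= PI -> z1 <= z2 ->
  0 <= psi et z2 - psi et z1 <= (PI / et) * (z2 - z1).
Proof.
  intros Het Hz. unfold psi.
  assert (HL : 1 <= PI / et).
  { apply Rmult_le_reg_r with et; [lra|]. unfold Rdiv. rewrite Rmult_assoc, Rinv_l by lra. lra. }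
  set (L := PI / et) in *.
  pose proof (fl_spec z1) as F1. pose proof (fl_spec z2) as F2.
  pose proof (Int_part_mono _ _ Hz) as Hk.
  set (k1 := Int_part z1) in *. set (k2 := Int_part z2) in *.
  set (w1 := z1 - IZR k1). set (w2 := z2 - IZR k2).
  assert (W1 : 0 <= w1 < 1) by (unfold w1; lra).
  assert (W2 : 0 <= w2 < 1) by (unfold w2; lra).
  replace z2 with (IZR k2 + w2) by (unfold w2; ring).
  replace z1 with (IZR k1 + w1) by (unfold w1; ring).
  destruct (Z.eq_dec k1 k2) as [E|E].
  - rewrite E in *. assert (w1 <= w2) by (unfold w1, w2; rewrite <- E; lra).
    unfold Rmin; repeat destruct Rle_dec; split; nra.
  - assert (IZR k1 + 1 <= IZR k2) by (apply IZR_lt_le; lia).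
    unfold Rmin; repeat destruct Rle_dec; split; nra.
Qed.

Lemma nu_shift th et x k : nu th et (x + 2 * PI * IZR k) = nu th et x + IZR k.
Proof.
  unfold nu. rewrite <- psi_shift. f_equal. field. apply PI_neq0.
Qed.

Lemma nu_lip th et x y : 0 < et <= PI -> Rabs (nu th et x - nu th et y) <= Rabs (x - y) / (2 * et).
Proof.
  intros Het. pose proof PI_RGT_0.
  assert (key : forall x y, x <= y -> 0 <= nu th et y - nu th et x <= (y - x) / (2 * et)).
  { intros a b Hab. unfold nu.
    assert (Hz : (a - th + et) / (2 * PI) <= (b - th + et) / (2 * PI)).
    { unfold Rdiv. apply Rmult_le_compat_r; [left; apply Rinv_0_lt_compat; lra|lra]. }
    pose proof (psi_mono_lip et _ _ Het Hz) as [H1 H2]. split; auto.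
    replace ((b - a) / (2 * et)) with (PI / et * ((b - th + et) / (2 * PI) - (a - th + et) / (2 * PI))); auto.
    field; split; lra. }
  destruct (Rle_dec x y) as [Hxy|Hxy].
  - destruct (key x y Hxy). rewrite Rabs_left1 by lra. rewrite Rabs_left1 by lra. lra.
  - destruct (key y x ltac:(lra)). rewrite Rabs_pos_eq by lra. rewrite Rabs_pos_eq by lra. lra.
Qed.

Lemma nu_zero th et x : 0 < et <= PI -> th + et - 2 * PI < x < th - et -> nu th et x = 0.
Proof.
  intros Het Hx. pose proof PI_RGT_0. unfold nu, psi.
  set (z := (x - th + et) / (2 * PI)).
  assert (Ez : 2 * PI * z = x - th + et) by (unfold z; field; lra).
  assert (Hz : - 1 + et / PI < z < 0).
  { split.
    - apply Rmult_lt_reg_l with (2 * PI); [lra|].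
      replace (2 * PI * (-1 + et / PI)) with (-2 * PI + 2 * et) by (field; lra). lra.
    - apply Rmult_lt_reg_l with (2 * PI); [lra|]. lra. }
  assert (et / PI > 0) by (unfold Rdiv; apply Rmult_gt_0_compat; [lra|apply Rinv_0_lt_compat; lra]).
  rewrite (fl_unique z (-1)) by (simpl; lra).
  assert (1 <= (z - IZR (-1)) * (PI / et)).
  { simpl. replace (PI / et) with (/ (et / PI)) by (field; lra).
    apply Rmult_le_reg_r with (et / PI); auto.
    rewrite Rmult_assoc, Rinv_l by lra. lra. }
  unfold Rmin; destruct Rle_dec; simpl; lra.
Qed.

Definition Dz (th x : R) : Z :=
  (Int_part ((x - th) / (2 * PI)) - Int_part (- ((x - th) / (2 * PI))))%Z.

Lemma finite_card_uniq {I : Type} (P : I -> Prop) n m : finite_card P n -> finite_card P m -> n = m.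
Proof.
  intros [l1 [N1 [L1 H1]]] [l2 [N2 [L2 H2]]]. subst.
  apply Nat.le_antisymm; apply NoDup_incl_length; auto; intros z Hz;
  [apply H2, H1|apply H1, H2]; auto.
Qed.

Lemma zcard_eq P n : finite_card P n -> zcard P = n.
Proof.
  intros H. unfold zcard. apply (finite_card_uniq P); auto.
  apply epsilon_spec. exists n; auto.
Qed.

Lemma finite_card_iff {I : Type} (P Q : I -> Prop) n : (forall i, P i <-> Q i) -> finite_card P n -> finite_card Q n.
Proof. intros H [l [? [? Hl]]]. exists l; repeat split; auto; intros; [apply Hl, H|apply H, Hl]; auto. Qed.

Lemma zrange_card lo n : finite_card (fun k => (lo <= k < lo + Z.of_nat n)%Z) n.
Proof.
  exists (map (fun i => (lo + Z.of_nat i)%Z) (seq 0 n)). repeat split.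
  - apply NoDup_map_NoDup_ForallPairs. intros a b _ _ E. lia. apply seq_NoDup.
  - rewrite length_map, length_seq; auto.
  - intros Hk. apply in_map_iff. exists (Z.to_nat (i - lo)). split. lia. apply in_seq. lia.
  - apply in_map_iff in H. destruct H as [a [<- Ha]]. lia.
  - apply in_map_iff in H. destruct H as [a [<- Ha]]. apply in_seq in Ha. lia.
Qed.

Lemma zcard_real (P : Z -> Prop) lo hi : (lo <= hi + 1)%Z -> (forall k, P k <-> (lo <= k <= hi)%Z) ->
  INR (zcard P) = IZR (hi - lo + 1).
Proof.
  intros H HP. rewrite (zcard_eq P (Z.to_nat (hi - lo + 1))).
  - rewrite INR_IZR_INZ, Z2Nat.id by lia. auto.
  - eapply finite_card_iff; [|apply (zrange_card lo)]. intros k. rewrite HP, Z2Nat.id by lia. lia.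
Qed.

Lemma ltZ_iff X k : X < IZR k <-> (Int_part X < k)%Z.
Proof.
  pose proof (fl_spec X). split; intros H1.
  - apply lt_IZR. lra.
  - apply IZR_lt_le in H1. lra.
Qed.

Lemma leZ_iff k Y : IZR k <= Y <-> (k <= Int_part Y)%Z.
Proof.
  pose proof (fl_spec Y). split; intros H1.
  - destruct (Z.le_gt_cases k (Int_part Y)); auto. apply IZR_lt_le in H0. lra.
  - apply IZR_le in H1. lra.
Qed.

Lemma scale_lt th u v : u < th + 2 * PI * v <-> (u - th) / (2 * PI) < v.
Proof.
  pose proof PI_RGT_0. assert (E : u - th = 2 * PI * ((u - th) / (2 * PI))) by (field; lra).
  split; intros.
  - apply Rmult_lt_reg_l with (2 * PI); lra.
  - assert (2 * PI * ((u - th) / (2 * PI)) < 2 * PI * v) by (apply Rmult_lt_compat_l; lra). lra.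
Qed.

Lemma scale_le th u v : u <= th + 2 * PI * v <-> (u - th) / (2 * PI) <= v.
Proof.
  pose proof PI_RGT_0. assert (E : u - th = 2 * PI * ((u - th) / (2 * PI))) by (field; lra).
  split; intros.
  - apply Rmult_le_reg_l with (2 * PI); lra.
  - assert (2 * PI * ((u - th) / (2 * PI)) <= 2 * PI * v) by (apply Rmult_le_compat_l; lra). lra.
Qed.

Lemma half_D th x y : x < y ->
  (INR (zcard (fun k => x < th + 2 * PI * IZR k < y)) +
   INR (zcard (fun k => x <= th + 2 * PI * IZR k <= y))) / 2 = (IZR (Dz th y) - IZR (Dz th x)) / 2.
Proof.
  intros Hxy. pose proof PI_RGT_0.
  set (X := (x - th) / (2 * PI)). set (Y := (y - th) / (2 * PI)).
  assert (HXY : X < Y).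
  { unfold X, Y, Rdiv. apply Rmult_lt_compat_r; [apply Rinv_0_lt_compat; lra|lra]. }
  assert (A1 : forall k, x < th + 2 * PI * IZR k <-> (Int_part X < k)%Z).
  { intros k. rewrite scale_lt. apply ltZ_iff. }
  assert (A2 : forall k, th + 2 * PI * IZR k < y <-> (k < - Int_part (- Y))%Z).
  { intros k. transitivity (Int_part (- Y) < - k)%Z; [|lia].
    rewrite <- ltZ_iff, opp_IZR.
    pose proof (scale_le th y (IZR k)) as [Ha Hb]. fold Y in Ha, Hb. split; intros H1.
    - destruct (Rle_dec Y (IZR k)) as [r|r]; [|lra]. apply Hb in r. lra.
    - destruct (Rle_dec y (th + 2 * PI * IZR k)) as [r|r]; [|lra]. apply Ha in r. lra. }
  assert (A3 : forall k, x <= th + 2 * PI * IZR k <-> (- Int_part (- X) <= k)%Z).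
  { intros k. rewrite scale_le. fold X. split; intros H1.
    - assert (Hq : IZR (-k) <= - X) by (rewrite opp_IZR; lra). apply leZ_iff in Hq. lia.
    - assert (Hq : IZR (-k) <= - X) by (apply leZ_iff; lia). rewrite opp_IZR in Hq. lra. }
  assert (A4 : forall k, th + 2 * PI * IZR k <= y <-> (k <= Int_part Y)%Z).
  { intros k. rewrite <- leZ_iff. pose proof (scale_lt th y (IZR k)) as [Ha Hb]. fold Y in Ha, Hb. split; intros H1.
    - destruct (Rle_dec (IZR k) Y) as [r|r]; auto. exfalso. assert (y < th + 2 * PI * IZR k) by (apply Hb; lra). lra.
    - destruct (Rle_dec (th + 2 * PI * IZR k) y) as [r|r]; auto. exfalso. assert (Y < IZR k) by (apply Ha; lra). lra. }
  pose proof (fl_spec X). pose proof (fl_spec Y). pose proof (fl_spec (- X)). pose proof (fl_spec (- Y)).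
  rewrite (zcard_real _ (Int_part X + 1) (- Int_part (- Y) - 1)).
  2:{ assert (Int_part X < - Int_part (- Y))%Z; [|lia].
      apply lt_IZR. rewrite opp_IZR. lra. }
  2:{ intros k. rewrite A1, A2. lia. }
  rewrite (zcard_real _ (- Int_part (- X)) (Int_part Y)).
  2:{ assert (- Int_part (- X) < Int_part Y + 2)%Z; [|lia].
      apply lt_IZR. rewrite plus_IZR, opp_IZR. simpl. lra. }
  2:{ intros k. rewrite A3, A4. lia. }
  unfold Dz. fold X Y. rewrite <- plus_IZR, <- minus_IZR. f_equal. f_equal. lia.
Qed.

Lemma bracket_D th x y : bracket th x y = (IZR (Dz th y) - IZR (Dz th x)) / 2.
Proof.
  unfold bracket. destruct (Rlt_dec x y) as [H|H].
  - apply half_D; auto.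
  - destruct (Rlt_dec y x) as [H'|H'].
    + rewrite half_D by auto. field.
    + assert (x = y) by lra. subst. field.
Qed.

Definition good (th et x : R) : Prop :=
  forall k : Z, Rabs (x - th - 2 * PI * IZR k) < et -> x = th + 2 * PI * IZR k.

Lemma nu_D th et x : 0 < et <= PI -> good th et x -> 2 * nu th et x = IZR (Dz th x) + 1.
Proof.
  intros Het Hg. pose proof PI_RGT_0.
  unfold nu, psi, Dz.
  set (X := (x - th) / (2 * PI)).
  assert (EX : x - th = 2 * PI * X) by (unfold X; field; lra).
  assert (Ez : (x - th + et) / (2 * PI) = X + et / (2 * PI)) by (unfold X; field; lra).
  rewrite Ez.
  assert (Hq : et / (2 * PI) <= / 2).
  { apply Rmult_le_reg_l with (2 * PI); [lra|]. replace (2 * PI * (et / (2 * PI))) with et by (field; lra). lra. }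
  assert (Hq0 : 0 < et / (2 * PI)) by (unfold Rdiv; apply Rmult_lt_0_compat; [lra|apply Rinv_0_lt_compat; lra]).
  pose proof (fl_spec X) as FX. set (k := Int_part X) in *.
  destruct (Req_dec X (IZR k)) as [E|E].
  - rewrite (fl_unique (- X) (- k)) by (rewrite opp_IZR; lra).
    rewrite (fl_unique (X + et / (2 * PI)) k) by lra.
    replace ((X + et / (2 * PI) - IZR k) * (PI / et)) with (/ 2) by (rewrite E; field; lra).
    rewrite Rmin_right by lra. rewrite minus_IZR, opp_IZR. lra.
  - assert (HX : IZR k < X) by lra.
    rewrite (fl_unique (- X) (- k - 1)) by (rewrite minus_IZR, opp_IZR; simpl; lra).
    assert (G1 : et <= x - th - 2 * PI * IZR k).
    { destruct (Rlt_le_dec (Rabs (x - th - 2 * PI * IZR k)) et) as [h|h].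
      - apply Hg in h. exfalso. apply E. apply Rmult_eq_reg_l with (2 * PI); lra.
      - rewrite Rabs_pos_eq in h; auto. rewrite EX. assert (2 * PI * IZR k < 2 * PI * X) by (apply Rmult_lt_compat_l; lra). lra. }
    assert (G2 : et <= th + 2 * PI * IZR (k + 1) - x).
    { destruct (Rlt_le_dec (Rabs (x - th - 2 * PI * IZR (k+1))) et) as [h|h].
      - apply Hg in h. exfalso. rewrite plus_IZR in h. simpl in h.
        assert (X = IZR k + 1) by (apply Rmult_eq_reg_l with (2 * PI); lra). lra.
      - rewrite Rabs_left1 in h; [lra|]. rewrite plus_IZR; simpl. rewrite EX.
        assert (2 * PI * X < 2 * PI * (IZR k + 1)) by (apply Rmult_lt_compat_l; lra). lra. }
    rewrite plus_IZR in G2; simpl in G2.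
    assert (B1 : IZR k + et / PI <= X + et / (2 * PI)).
    { apply Rmult_le_reg_l with (2 * PI); [lra|].
      replace (2 * PI * (IZR k + et / PI)) with (2 * PI * IZR k + 2 * et) by (field; lra).
      replace (2 * PI * (X + et / (2 * PI))) with (2 * PI * X + et) by (field; lra). lra. }
    assert (B2 : X + et / (2 * PI) <= IZR k + 1).
    { apply Rmult_le_reg_l with (2 * PI); [lra|].
      replace (2 * PI * (X + et / (2 * PI))) with (2 * PI * X + et) by (field; lra). lra. }
    destruct (Req_dec (X + et / (2 * PI)) (IZR k + 1)) as [E2|E2].
    + rewrite E2. rewrite (fl_unique (IZR k + 1) (k + 1)) by (rewrite plus_IZR; simpl; lra).
      rewrite plus_IZR. simpl. replace ((IZR k + 1 - (IZR k + 1)) * (PI / et)) with 0 by ring.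
      rewrite Rmin_right by lra. rewrite minus_IZR, minus_IZR, opp_IZR. simpl. lra.
    + rewrite (fl_unique (X + et / (2 * PI)) k) by lra.
      assert (1 <= (X + et / (2 * PI) - IZR k) * (PI / et)).
      { apply Rmult_le_reg_r with (et / PI).
        unfold Rdiv; apply Rmult_lt_0_compat; [lra|apply Rinv_0_lt_compat; lra].
        replace ((X + et / (2 * PI) - IZR k) * (PI / et) * (et / PI)) with (X + et / (2 * PI) - IZR k) by (field; lra).
        lra. }
      rewrite Rmin_left by lra. rewrite minus_IZR, minus_IZR, opp_IZR. simpl. lra.
Qed.


Lemma Cmod_cs x : Cmod (cos x, sin x) = 1.
Proof.
  unfold Cmod. cbn [fst snd].
  replace (cos x ^ 2 + sin x ^ 2) with 1 by (pose proof (sin2_cos2 x); unfold Rsqr in *; nra).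
  apply sqrt_1.
Qed.

Definition E (x : R) : T := exist _ (cos x, sin x) (Cmod_cs x).

Lemma T_eq (z w : T) : proj1_sig z = proj1_sig w -> z = w.
Proof.
  destruct z as [z Hz], w as [w Hw]; simpl; intros ->. f_equal. apply proof_irrelevance.
Qed.

Lemma T_circle (z : T) : fst (proj1_sig z) ^ 2 + snd (proj1_sig z) ^ 2 = 1.
Proof.
  destruct z as [[p q] Hz]; cbn [fst snd proj1_sig]. unfold Cmod in Hz; cbn [fst snd] in Hz.
  assert (0 <= p ^ 2 + q ^ 2) by nra.
  rewrite <- (sqrt_sqrt (p ^ 2 + q ^ 2)) by auto. rewrite Hz; ring.
Qed.

Lemma cos_Z x k : cos (x + 2 * PI * IZR k) = cos x.
Proof.
  destruct (Z.le_gt_cases 0 k).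
  - rewrite <- (Z2Nat.id k) by auto. rewrite <- INR_IZR_INZ.
    replace (x + 2 * PI * INR (Z.to_nat k)) with (x + 2 * INR (Z.to_nat k) * PI) by ring.
    apply cos_period.
  - set (n := Z.to_nat (- k)). assert (IZR k = - INR n).
    { unfold n. rewrite INR_IZR_INZ, Z2Nat.id by lia. rewrite opp_IZR; ring. }
    rewrite H0. rewrite <- (cos_period (x + 2 * PI * - INR n) n). f_equal; ring.
Qed.

Lemma sin_Z x k : sin (x + 2 * PI * IZR k) = sin x.
Proof.
  destruct (Z.le_gt_cases 0 k).
  - rewrite <- (Z2Nat.id k) by auto. rewrite <- INR_IZR_INZ.
    replace (x + 2 * PI * INR (Z.to_nat k)) with (x + 2 * INR (Z.to_nat k) * PI) by ring.
    apply sin_period.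
  - set (n := Z.to_nat (- k)). assert (IZR k = - INR n).
    { unfold n. rewrite INR_IZR_INZ, Z2Nat.id by lia. rewrite opp_IZR; ring. }
    rewrite H0. rewrite <- (sin_period (x + 2 * PI * - INR n) n). f_equal; ring.
Qed.

Lemma E_Z x k : E (x + 2 * PI * IZR k) = E x.
Proof. apply T_eq; simpl. rewrite cos_Z, sin_Z; auto. Qed.

Lemma cs_Z x y : cos x = cos y -> sin x = sin y -> Z2pi (x - y).
Proof.
  intros Hc Hs. set (d := x - y).
  assert (Hd : cos d = 1).
  { unfold d. rewrite cos_minus, <- Hc, <- Hs. pose proof (sin2_cos2 x). unfold Rsqr in H. lra. }
  replace d with (2 * (d / 2)) in Hd by field. rewrite cos_2a_sin in Hd.
  assert (sin (d / 2) = 0) by nra.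
  destruct (sin_eq_0_0 _ H) as [k Hk]. exists k. lra.
Qed.

Lemma E_eq_Z x y : E x = E y -> Z2pi (x - y).
Proof. intros H. apply (f_equal (@proj1_sig _ _)) in H. simpl in H. inversion H. apply cs_Z; auto. Qed.

Lemma Z2pi_E x y : Z2pi (x - y) -> E x = E y.
Proof. intros [k Hk]. replace x with (y + 2 * PI * IZR k) by lra. apply E_Z. Qed.

Definition ang (z : T) : R :=
  if Rle_dec 0 (snd (proj1_sig z)) then acos (fst (proj1_sig z)) else - acos (fst (proj1_sig z)).

Lemma E_ang z : E (ang z) = z.
Proof.
  pose proof (T_circle z). apply T_eq. unfold ang. destruct z as [[p q] Hz]; simpl in *.
  assert (Hp : -1 <= p <= 1) by (split; nra).
  assert (Hs : sqrt (1 - p²) = Rabs q).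
  { rewrite <- sqrt_Rsqr_abs. f_equal. unfold Rsqr. lra. }
  destruct Rle_dec as [h|h]; simpl.
  - rewrite cos_acos, sin_acos, Hs, Rabs_pos_eq by auto. auto.
  - rewrite cos_neg, sin_neg, cos_acos, sin_acos, Hs, Rabs_left by (auto; lra). f_equal; ring.
Qed.

Lemma ang_bound z : - PI <= ang z <= PI.
Proof. unfold ang. destruct Rle_dec; pose proof (acos_bound (fst (proj1_sig z))); lra. Qed.

Lemma oneT_E : oneT = E 0.
Proof. apply T_eq; simpl. rewrite cos_0, sin_0; auto. Qed.

Lemma distT_E x y : distT (E x) (E y) = Rabs (red (x - y)).
Proof.
  pose proof PI_RGT_0.
  destruct (red_Z (x - y)) as [k Hk]. pose proof (red_range (x - y)).
  set (d := red (x - y)) in *.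
  assert (Hc : cos (x - y) = cos d).
  { replace (x - y) with (d + 2 * PI * IZR k) by lra. apply cos_Z. }
  unfold distT. simpl proj1_sig.
  assert (HC : Cmod (Cminus (cos x, sin x) (cos y, sin y)) = 2 * Rabs (sin (d / 2))).
  { unfold Cmod, Cminus, Cplus, Copp; cbn [fst snd].
    replace ((cos x + - cos y) ^ 2 + (sin x + - sin y) ^ 2) with (2 - 2 * cos (x - y)).
    2:{ rewrite cos_minus. pose proof (sin2_cos2 x). pose proof (sin2_cos2 y). unfold Rsqr in *. nra. }
    rewrite Hc. replace d with (2 * (d / 2)) at 1 by field. rewrite cos_2a_sin.
    replace (2 - 2 * (1 - 2 * sin (d / 2) * sin (d / 2))) with (Rsqr (2 * sin (d / 2))) by (unfold Rsqr; ring).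
    rewrite sqrt_Rsqr_abs, Rabs_mult, (Rabs_pos_eq 2) by lra. reflexivity. }
  rewrite HC. replace (2 * Rabs (sin (d / 2)) / 2) with (Rabs (sin (d / 2))) by field.
  destruct (Rle_dec 0 d) as [h|h].
  - assert (0 <= sin (d / 2)) by (apply sin_ge_0; lra).
    rewrite (Rabs_pos_eq (sin _)), (Rabs_pos_eq d) by auto.
    rewrite asin_sin by lra. field.
  - assert (sin (d / 2) <= 0).
    { replace (d / 2) with (- (- d / 2)) by field. rewrite sin_neg.
      assert (0 <= sin (- d / 2)) by (apply sin_ge_0; lra). lra. }
    rewrite (Rabs_left1 (sin _)), (Rabs_left1 d) by (auto; lra).
    rewrite <- sin_neg, asin_sin by lra. field.
Qed.

Lemma distT_ang z w : distT z w = Rabs (red (ang z - ang w)).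
Proof. rewrite <- (E_ang z) at 1. rewrite <- (E_ang w) at 1. apply distT_E. Qed.

Lemma distT_nonneg z w : 0 <= distT z w.
Proof. rewrite distT_ang. apply Rabs_pos. Qed.

Lemma distT_sym z w : distT z w = distT w z.
Proof. rewrite !distT_ang. rewrite <- red_opp. f_equal. f_equal. f_equal. ring. Qed.

Lemma distT_tri z w v : distT z v <= distT z w + distT w v.
Proof.
  rewrite !distT_ang. replace (ang z - ang v) with ((ang z - ang w) + (ang w - ang v)) by ring.
  apply red_tri.
Qed.

Lemma distT_0 z w : distT z w = 0 -> z = w.
Proof.
  rewrite distT_ang. intros H. apply Rabs_eq_0 in H.
  rewrite <- (E_ang z), <- (E_ang w). apply Z2pi_E.
  pose proof (red_Z (ang z - ang w)). rewrite H in H0. rewrite Rminus_0_r in H0; auto.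
Qed.


Definition params (th et : R) : Prop := 0 < et <= PI /\ et < th /\ th + et < 2 * PI.

Definition gam (th et : R) (z : T) : R := 2 * PI * nu th et (ang z).

Definition c0 (th et : R) : R := Rmin (th - et) (2 * PI - th - et).

Lemma c0_pos th et : params th et -> 0 < c0 th et.
Proof. intros [? [? ?]]. unfold c0, Rmin; destruct Rle_dec; lra. Qed.

Lemma nu_small th et x : params th et -> Rabs x < c0 th et -> nu th et x = 0.
Proof.
  intros [H1 [H2 H3]] Hx. apply nu_zero; auto. unfold c0, Rmin in Hx.
  apply Rabs_def2 in Hx. destruct Rle_dec; lra.
Qed.

Lemma gam_one th et : params th et -> gam th et oneT = 0.
Proof.
  intros Hp. unfold gam. rewrite oneT_E.
  assert (ang (E 0) = 0).
  { unfold ang; simpl. rewrite sin_0, cos_0. destruct Rle_dec; [apply acos_1|lra]. }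
  rewrite H, nu_small; auto. ring. rewrite Rabs_R0. apply c0_pos; auto.
Qed.

Lemma gam_supp th et z : params th et -> gam th et z <> 0 -> c0 th et <= distT z oneT.
Proof.
  intros Hp Hne. destruct (Rlt_le_dec (distT z oneT) (c0 th et)) as [h|h]; auto. exfalso.
  apply Hne. unfold gam.
  rewrite distT_ang in h.
  assert (ang oneT = 0).
  { rewrite oneT_E. unfold ang; simpl. rewrite sin_0, cos_0. destruct Rle_dec; [apply acos_1|lra]. }
  rewrite H, Rminus_0_r in h.
  destruct (red_Z (ang z)) as [k Hk]. pose proof (ang_bound z).
  assert (Hc : c0 th et < PI).
  { destruct Hp as [? [? ?]]. unfold c0, Rmin; destruct Rle_dec; lra. }
  assert (Hk0 : k = 0%Z).
  { destruct (Z.eq_dec k 0); auto. exfalso. apply IZR_nz_ge1 in n.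
    pose proof PI_RGT_0.
    assert (Rabs (2 * PI * IZR k) >= 2 * PI) by (rewrite Rabs_mult, (Rabs_pos_eq (2*PI)) by lra; nra).
    assert (Rabs (ang z) <= PI) by (apply Rabs_le; lra).
    pose proof (Rabs_triang_inv (2 * PI * IZR k) (ang z)).
    replace (2 * PI * IZR k - ang z) with (- red (ang z)) in H4 by lra. rewrite Rabs_Ropp in H4. lra. }
  subst k. simpl in Hk. rewrite Rmult_0_r in Hk.
  assert (Er : red (ang z) = ang z) by lra. rewrite Er in h.
  rewrite nu_small; auto. ring.
Qed.

Lemma gam_lift th et x : Z2pi (gam th et (E x) - 2 * PI * nu th et x).
Proof.
  pose proof (E_eq_Z _ _ (E_ang (E x))) as [m Hm]. unfold gam.
  replace (ang (E x)) with (x + 2 * PI * IZR m) by lra. rewrite nu_shift.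
  exists m. ring.
Qed.

Lemma gam_lip th et z w : params th et ->
  Rabs (red (gam th et z - gam th et w)) <= (PI / et) * distT z w.
Proof.
  intros Hp. pose proof PI_RGT_0. destruct Hp as [Het _].
  rewrite distT_ang. unfold gam. set (a := ang z). set (b := ang w).
  destruct (red_Z (a - b)) as [k Hk].
  rewrite (red_shift _ (2 * PI * (nu th et a - nu th et (b + 2 * PI * IZR k)))).
  2:{ rewrite nu_shift. exists k. ring. }
  eapply Rle_trans. apply red_le.
  rewrite Rabs_mult, (Rabs_pos_eq (2 * PI)) by lra.
  eapply Rle_trans. apply Rmult_le_compat_l. lra. apply nu_lip; auto.
  replace (a - (b + 2 * PI * IZR k)) with (red (a - b)) by lra.
  right. field. lra.
Qed.

Lemma unif2 (a b : R) (D : R -> R -> R -> R -> R) :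
  (forall r t r' t', D r t r' t' = D r' t' r t) ->
  (forall r t r' t' r'' t'', D r t r'' t'' <= D r t r' t' + D r' t' r'' t'') ->
  (forall r0 t0, a <= r0 <= b -> 0 <= t0 <= 1 -> forall eps, 0 < eps -> exists delta, 0 < delta /\
     forall r t, a <= r <= b -> 0 <= t <= 1 -> Rabs (r - r0) < delta -> Rabs (t - t0) < delta ->
       D r t r0 t0 < eps) ->
  forall eps, 0 < eps -> exists delta, 0 < delta /\
    forall r t r' t', a <= r <= b -> 0 <= t <= 1 -> a <= r' <= b -> 0 <= t' <= 1 ->
      Rabs (r - r') < delta -> Rabs (t - t') < delta -> D r t r' t' < eps.
Proof.
  intros Hsym Htri Hc eps Heps.
  set (P := fun u v d => 0 < d /\ (a <= u <= b -> 0 <= v <= 1 ->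
     forall r t, a <= r <= b -> 0 <= t <= 1 -> Rabs (r - u) < d -> Rabs (t - v) < d -> D r t u v < eps / 2)).
  assert (HP : forall u v, exists d, P u v d).
  { intros u v. destruct (classic (a <= u <= b /\ 0 <= v <= 1)) as [[Hu Hv]|Hn].
    - destruct (Hc u v Hu Hv (eps / 2) ltac:(lra)) as [d [Hd Hd']]. exists d. split; auto.
    - exists 1. split; [lra|]. intros; tauto. }
  set (df := fun u v => epsilon (inhabits 1) (P u v)).
  assert (Hdf : forall u v, P u v (df u v)) by (intros; apply epsilon_spec, HP).
  assert (Hpos : forall u v, 0 < df u v / 2) by (intros u v; destruct (Hdf u v); lra).
  set (delta := fun u v => mkposreal _ (Hpos u v)).
  destruct (compactness_value_2d a b 0 1 delta) as [d Hd].
  exists d. split; [apply cond_pos|].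
  intros r t r' t' Hr Ht Hr' Ht' H1 H2.
  apply NNPP. intros Hneg. apply (Hd r t Hr Ht). intros [u [v [Hu [Hv [Hru [Htv Hdl]]]]]].
  apply Hneg. simpl in *.
  destruct (Hdf u v) as [Hdp Huv].
  assert (D r t u v < eps / 2) by (apply Huv; auto; lra).
  assert (D r' t' u v < eps / 2).
  { apply Huv; auto.
    - replace (r' - u) with ((r' - r) + (r - u)) by ring. eapply Rle_lt_trans. apply Rabs_triang.
      rewrite Rabs_minus_sym in H1. lra.
    - replace (t' - v) with ((t' - t) + (t - v)) by ring. eapply Rle_lt_trans. apply Rabs_triang.
      rewrite Rabs_minus_sym in H2. lra. }
  pose proof (Htri r t u v r' t'). rewrite (Hsym u v r' t') in H3. lra.
Qed.


Lemma FS_at h v : FS h v -> exists N, forall M, (N <= M)%nat -> v = psum h M.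
Proof. intros [N [HN ->]]. exists N. intros M HM. symmetry. apply psum_stable; auto. Qed.

Lemma FS_at2 h g v w : FS h v -> FS g w -> exists M, v = psum h M /\ w = psum g M.
Proof.
  intros H1 H2. destruct (FS_at _ _ H1) as [N1 HN1]. destruct (FS_at _ _ H2) as [N2 HN2].
  exists (Nat.max N1 N2). split; [apply HN1|apply HN2]; lia.
Qed.

Lemma proj_enum (S : rigged T) (e : nat -> R) :
  (forall z, has_mult (fun j => (cos (e j), sin (e j)) = proj1_sig z) (S z)) ->
  enumerates S (fun j => E (e j)).
Proof.
  intros H z. eapply has_mult_iff; [|apply (H z)]. intros j; split; intros Hj.
  - apply T_eq. simpl. auto.
  - rewrite <- Hj. reflexivity.
Qed.

Lemma distR_nonneg x y : 0 <= distR x y.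
Proof. unfold distR; apply Rabs_pos. Qed.

Lemma nu_supp th et x : params th et -> nu th et x <> 0 -> c0 th et <= distR x 0.
Proof.
  intros Hp Hne. unfold distR. rewrite Rminus_0_r. destruct (Rlt_le_dec (Rabs x) (c0 th et)); auto.
  exfalso; apply Hne, nu_small; auto.
Qed.

Definition Gf (th et : R) (F : R -> R -> rigged T) (r t : R) : R :=
  epsilon (inhabits 0) (fun v => exists e, enumerates (F r t) e /\ FS (fun j => gam th et (e j)) v).

Lemma G_spec th et F r t e : params th et -> in_S1 distT oneT (F r t) -> enumerates (F r t) e ->
  FS (fun j => gam th et (e j)) (Gf th et F r t).
Proof.
  intros Hp HS He.
  assert (Hc := c0_pos th et Hp).
  assert (Hex : exists v, exists e, enumerates (F r t) e /\ FS (fun j => gam th et (e j)) v).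
  { destruct (FS_exists distT oneT (F r t) (c0 th et) (gam th et) e distT_nonneg HS Hc
      (fun z => gam_supp th et z Hp) (enum_cmatch _ _ _ _ _ He)) as [v Hv]. eauto. }
  pose proof (epsilon_spec (inhabits 0) _ Hex) as [e' [He' Hv]]. fold (Gf th et F r t) in Hv.
  apply (FS_transfer distT oneT (F r t) (c0 th et) (gam th et) e' e); auto using distT_nonneg, enum_cmatch.
  intros z; apply gam_supp; auto.
Qed.

Definition Vf (th et : R) (St : R -> rigged R) (r : R) : R :=
  epsilon (inhabits 0) (fun v => exists e, enumerates (St r) e /\ FS (fun j => nu th et (e j)) v).

Lemma V_spec th et St r u : params th et -> in_S1 distR 0 (St r) -> cmatch distR 0 (St r) (c0 th et) u ->
  FS (fun j => nu th et (u j)) (Vf th et St r).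
Proof.
  intros Hp HS Hu.
  assert (Hc := c0_pos th et Hp).
  assert (Hex : exists v, exists e, enumerates (St r) e /\ FS (fun j => nu th et (e j)) v).
  { pose proof HS as [H0 [H1 [s [Hs Hsx]]]].
    destruct (FS_exists distR 0 (St r) (c0 th et) (nu th et) s distR_nonneg HS Hc
      (fun x => nu_supp th et x Hp) (enum_cmatch _ _ _ _ _ Hs)) as [v Hv]. eauto. }
  pose proof (epsilon_spec (inhabits 0) _ Hex) as [e' [He' Hv]]. fold (Vf th et St r) in Hv.
  apply (FS_transfer distR 0 (St r) (c0 th et) (nu th et) e' u); auto using distR_nonneg, enum_cmatch.
  intros x; apply nu_supp; auto.
Qed.


Lemma GV_rel th et F St r t : params th et -> in_S1 distT oneT (F r t) -> in_S1 distR 0 (St r) ->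
  proj_eq (St r) (F r t) -> Z2pi (Gf th et F r t - 2 * PI * Vf th et St r).
Proof.
  intros Hp HF HS [e [He HT]].
  pose proof (G_spec th et F r t _ Hp HF (proj_enum _ _ HT)) as H1.
  pose proof (V_spec th et St r e Hp HS (enum_cmatch _ _ _ _ _ He)) as H2.
  destruct (FS_at2 _ _ _ _ H1 H2) as [M [-> ->]].
  rewrite <- psum_scal, <- psum_minus. apply Z2pi_psum. intros j. apply gam_lift.
Qed.

Lemma G_base th et F r t : params th et -> in_S1 distT oneT (F r t) -> is_base_rigged oneT (F r t) ->
  Gf th et F r t = 0.
Proof.
  intros Hp HF [Hone Hz]. pose proof HF as [_ [_ [e [He _]]]].
  pose proof (G_spec th et F r t e Hp HF He) as H.
  apply (FS_unique _ _ _ H). exists O. split; auto.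
  intros j _. destruct (classic (e j = oneT)) as [E|E].
  - rewrite E. apply gam_one; auto.
  - exfalso. pose proof (He (e j)) as Hm. rewrite (Hz _ E) in Hm.
    apply (has_mult_nz _ _ j Hm); reflexivity.
Qed.

Lemma G_same th et F r t t' : params th et -> in_S1 distT oneT (F r t) -> in_S1 distT oneT (F r t') ->
  (forall z, F r t z = F r t' z) -> Gf th et F r t = Gf th et F r t'.
Proof.
  intros Hp H1 H2 Heq. pose proof H1 as [_ [_ [e [He _]]]].
  assert (He' : enumerates (F r t') e) by (intros z; rewrite <- Heq; apply He).
  apply (FS_unique _ _ _ (G_spec th et F r t e Hp H1 He) (G_spec th et F r t' e Hp H2 He')).
Qed.

Lemma supp_lift (St : rigged R) (S : rigged T) (x : R) :
  proj_eq St S -> St x <> Fin 0 -> S (E x) <> Fin 0.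
Proof.
  intros [e [He HT]] Hx. destruct (has_mult_ex _ _ (He x) Hx) as [i Hi].
  pose proof (HT (E x)) as Hm. apply (has_mult_nz _ _ i Hm). simpl. rewrite Hi; auto.
Qed.

Lemma good_2pi th et m : params th et -> good th et (2 * PI * IZR m).
Proof.
  intros [H1 [H2 H3]] k Hk. exfalso. pose proof PI_RGT_0.
  replace (2 * PI * IZR m - th - 2 * PI * IZR k) with (2 * PI * IZR (m - k) - th) in Hk by (rewrite minus_IZR; ring).
  destruct (Z.le_gt_cases (m - k) 0) as [h|h].
  - apply IZR_le in h. apply Rabs_def2 in Hk. nra.
  - assert (1 <= IZR (m - k)) by (apply IZR_le; lia). apply Rabs_def2 in Hk. nra.
Qed.

Definition sep (th et : R) (F1 : rigged T) : Prop :=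
  forall z, F1 z <> Fin 0 -> distT z (E th) < et -> z = E th.

Lemma good_sep th et F1 x : params th et -> sep th et F1 -> F1 (E x) <> Fin 0 -> good th et x.
Proof.
  intros Hp Hs Hx k Hk. pose proof PI_RGT_0.
  assert (distT (E x) (E th) < et).
  { rewrite distT_E. eapply Rle_lt_trans; [apply (red_min _ k)|]. replace (x - th - 2 * PI * IZR k) with (x - th - 2 * PI * IZR k) by ring. auto. }
  apply Hs in H0; auto. apply E_eq_Z in H0. destruct H0 as [m Hm].
  assert (Z2pi (2 * PI * IZR (m - k))) by (exists (m - k)%Z; auto).
  apply Z2pi_small in H0.
  - rewrite minus_IZR in H0. assert (IZR m = IZR k) by nra. lra.
  - rewrite minus_IZR. replace (2 * PI * (IZR m - IZR k)) with (x - th - 2 * PI * IZR k) by lra.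
    destruct Hp as [? _]. lra.
Qed.

Lemma choose_eta th F1 : 0 < th < 2 * PI -> in_S1 distT oneT F1 -> exists et, params th et /\ sep th et F1.
Proof.
  intros Hth HF. pose proof PI_RGT_0.
  set (rho := Rmin th (2 * PI - th) / 2).
  assert (Hr1 : rho <= th / 2) by (unfold rho, Rmin; destruct Rle_dec; lra).
  assert (Hr2 : rho <= (2 * PI - th) / 2) by (unfold rho, Rmin; destruct Rle_dec; lra).
  assert (Hr0 : 0 < rho) by (unfold rho, Rmin; destruct Rle_dec; lra).
  pose proof HF as [_ [_ [s [Hs Hex]]]].
  destruct (tail_small distT oneT s rho distT_nonneg Hex Hr0) as [N HN].
  assert (HE : forall M, exists e1, 0 < e1 /\ forall i, (i < M)%nat -> s i <> E th -> e1 <= distT (s i) (E th)).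
  { induction M as [|M [e1 [He1 He1']]].
    - exists 1; split; [lra|]; intros; lia.
    - destruct (classic (s M = E th)) as [Q|Q].
      + exists e1; split; auto. intros i Hi Hne. destruct (Nat.eq_dec i M); [subst; tauto|]. apply He1'; auto; lia.
      + assert (0 < distT (s M) (E th)).
        { destruct (distT_nonneg (s M) (E th)) as [h|h]; auto. symmetry in h. apply distT_0 in h. tauto. }
        exists (Rmin e1 (distT (s M) (E th))). split. unfold Rmin; destruct Rle_dec; lra.
        intros i Hi Hne. destruct (Nat.eq_dec i M). subst. apply Rmin_r.
        eapply Rle_trans. apply Rmin_l. apply He1'; auto; lia. }
  destruct (HE N) as [e1 [He1 He1']].
  exists (Rmin rho e1). split.
  - assert (Rmin rho e1 <= rho) by apply Rmin_l. assert (0 < Rmin rho e1) by (unfold Rmin; destruct Rle_dec; lra).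
    split; [split|split]; lra.
  - intros z Hz Hd.
    destruct (Rlt_le_dec (distT z oneT) rho) as [h|h].
    + exfalso. pose proof (distT_tri (E th) z oneT). rewrite distT_sym in Hd.
      assert (Rmin rho e1 <= rho) by apply Rmin_l.
      rewrite oneT_E, distT_E in H0. rewrite Rminus_0_r in H0. rewrite <- oneT_E in H0.
      destruct (Rlt_le_dec th PI).
      * rewrite (red_char th 0) in H0 by (simpl; lra). simpl in H0. rewrite Rmult_0_r, Rminus_0_r, Rabs_pos_eq in H0 by lra.
        lra.
      * rewrite (red_char th 1) in H0 by (simpl; lra). simpl in H0. rewrite Rabs_left1 in H0 by lra. lra.
    + destruct (fin_mult distT oneT F1 s rho N Hs HN z h) as [m [Em Hlt]].
      assert (Fin m <> Fin 0) by (rewrite <- Em; auto).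
      pose proof (Hs z) as Hsz. rewrite Em in Hsz. destruct (has_mult_ex _ _ Hsz H0) as [i Hi].
      destruct (classic (z = E th)) as [Q|Q]; auto. exfalso.
      assert (e1 <= distT (s i) (E th)) by (apply He1'; [apply Hlt; auto| rewrite Hi; auto]).
      rewrite Hi in H1. assert (Rmin rho e1 <= e1) by apply Rmin_r. lra.
Qed.


Lemma FS_sup h v : FS h v -> exists N, (forall j, (N <= j)%nat -> h j = 0) /\ forall M, (N <= M)%nat -> v = psum h M.
Proof. intros [N [HN ->]]. exists N. split; auto. intros M HM. symmetry. apply psum_stable; auto. Qed.

Lemma G_cont th et a b F : params th et ->
  (forall r t, a <= r <= b -> 0 <= t <= 1 -> in_S1 distT oneT (F r t)) ->
  rhom_cont distT a b F ->
  forall r0 t0, a <= r0 <= b -> 0 <= t0 <= 1 -> forall eps, 0 < eps -> exists delta, 0 < delta /\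
    forall r t, a <= r <= b -> 0 <= t <= 1 -> Rabs (r - r0) < delta -> Rabs (t - t0) < delta ->
      Rabs (red (Gf th et F r t - Gf th et F r0 t0)) < eps.
Proof.
  intros Hp HF Hc r0 t0 Hr0 Ht0 eps Heps. pose proof PI_RGT_0. pose proof Hp as [[Het _] _].
  assert (He' : 0 < eps * et / PI) by (unfold Rdiv; apply Rmult_lt_0_compat; [nra|apply Rinv_0_lt_compat; lra]).
  destruct (Hc r0 t0 Hr0 Ht0 _ He') as [d [Hd Hd']]. exists d. split; auto.
  intros r t Hr Ht Hrr Htt. destruct (Hd' r t Hr Ht Hrr Htt) as [s [u [Hs [Hu [Hex Hser]]]]].
  pose proof (G_spec th et F r t s Hp (HF r t Hr Ht) Hs) as H1.
  pose proof (G_spec th et F r0 t0 u Hp (HF r0 t0 Hr0 Ht0) Hu) as H2.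
  destruct (FS_at2 _ _ _ _ H1 H2) as [M [-> ->]].
  rewrite <- psum_minus. eapply Rle_lt_trans. apply red_psum.
  eapply Rle_lt_trans. apply (psum_le _ (fun j => (PI / et) * distT (s j) (u j))). intros; apply gam_lip; auto.
  rewrite psum_scal.
  assert (psum (fun j => distT (s j) (u j)) M <= Series (fun j => distT (s j) (u j))).
  { apply psum_le_Series; auto. intros; apply distT_nonneg. }
  assert (0 < PI / et) by (unfold Rdiv; apply Rmult_lt_0_compat; [lra|apply Rinv_0_lt_compat; lra]).
  apply Rle_lt_trans with ((PI / et) * Series (fun j => distT (s j) (u j))).
  apply Rmult_le_compat_l; lra.
  replace eps with ((PI / et) * (eps * et / PI)) by (field; lra).
  apply Rmult_lt_compat_l; auto.
Qed.

Lemma V_cont th et a b St : params th et ->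
  (forall r, a <= r <= b -> in_S1 distR 0 (St r)) ->
  rpath_cont distR a b St ->
  forall r0 t0, a <= r0 <= b -> 0 <= t0 <= 1 -> forall eps, 0 < eps -> exists delta, 0 < delta /\
    forall r t, a <= r <= b -> 0 <= t <= 1 -> Rabs (r - r0) < delta -> Rabs (t - t0) < delta ->
      Rabs (Vf th et St r - Vf th et St r0) < eps.
Proof.
  intros Hp HS Hc r0 t0 Hr0 Ht0 eps Heps. pose proof PI_RGT_0. pose proof Hp as [[Het Het'] _].
  assert (He' : 0 < 2 * et * eps) by nra.
  destruct (Hc r0 Hr0 _ He') as [d [Hd Hd']]. exists d. split; auto.
  intros r t Hr Ht Hrr Htt. destruct (Hd' r Hr Hrr) as [s [u [Hs [Hu [Hex Hser]]]]].
  pose proof (V_spec th et St r s Hp (HS r Hr) (enum_cmatch _ _ _ _ _ Hs)) as H1.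
  pose proof (V_spec th et St r0 u Hp (HS r0 Hr0) (enum_cmatch _ _ _ _ _ Hu)) as H2.
  destruct (FS_at2 _ _ _ _ H1 H2) as [M [-> ->]].
  rewrite <- psum_minus. eapply Rle_lt_trans. apply psum_abs.
  eapply Rle_lt_trans. apply (psum_le _ (fun j => / (2 * et) * distR (s j) (u j))).
  { intros. unfold distR. rewrite Rmult_comm. apply nu_lip; lra. }
  rewrite psum_scal.
  assert (psum (fun j => distR (s j) (u j)) M <= Series (fun j => distR (s j) (u j))).
  { apply psum_le_Series; auto. intros; apply distR_nonneg. }
  assert (0 < / (2 * et)) by (apply Rinv_0_lt_compat; lra).
  apply Rle_lt_trans with (/ (2 * et) * Series (fun j => distR (s j) (u j))).
  apply Rmult_le_compat_l; lra.
  replace eps with (/ (2 * et) * (2 * et * eps)) by (field; lra).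
  apply Rmult_lt_compat_l; auto.
Qed.

Lemma mu_eq th et a b F F1 (k : R) St thf : params th et -> sep th et F1 -> a < b ->
  is_base_rigged oneT (F a k) -> (forall z, F b k z = F1 z) ->
  mu_data a b (fun r => F r k) St thf ->
  mu_sum a b th thf = Vf th et St b - Vf th et St a.
Proof.
  intros Hp Hsep Hab [Hone Hz] HFb [HS1 [_ [Hproj [_ Hth]]]].
  pose proof (c0_pos th et Hp) as Hc.
  assert (Hcm : forall r, a <= r <= b -> cmatch distR 0 (St r) (c0 th et) (fun j => thf j r)).
  { intros r Hr x Hx. apply Hth; auto. intros ->. unfold distR in Hx. rewrite Rminus_0_r, Rabs_R0 in Hx. lra. }
  assert (Ha : a <= a <= b) by lra. assert (Hb : a <= b <= b) by lra.
  pose proof (V_spec th et St a _ Hp (HS1 a Ha) (Hcm a Ha)) as Va.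
  pose proof (V_spec th et St b _ Hp (HS1 b Hb) (Hcm b Hb)) as Vb.
  assert (nzsupp : forall r j, a <= r <= b -> thf j r <> 0 -> St r (thf j r) <> Fin 0).
  { intros r j Hr Hne. destruct (Hth r Hr) as [_ Hm]. apply (has_mult_nz _ _ j (Hm _ Hne)). reflexivity. }
  assert (Gda : forall j, good th et (thf j a)).
  { intros j. destruct (Req_dec (thf j a) 0) as [E0|E0].
    - rewrite E0. replace 0 with (2 * PI * IZR 0) by (simpl; ring). apply good_2pi; auto.
    - pose proof (supp_lift _ _ _ (Hproj a Ha) (nzsupp a j Ha E0)) as HT. simpl in HT.
      destruct (classic (E (thf j a) = oneT)) as [Q|Q]; [|exfalso; apply HT, Hz, Q].
      rewrite oneT_E in Q. apply E_eq_Z in Q. destruct Q as [m Hm].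
      replace (thf j a) with (2 * PI * IZR m) by lra. apply good_2pi; auto. }
  assert (Gdb : forall j, good th et (thf j b)).
  { intros j. destruct (Req_dec (thf j b) 0) as [E0|E0].
    - rewrite E0. replace 0 with (2 * PI * IZR 0) by (simpl; ring). apply good_2pi; auto.
    - pose proof (supp_lift _ _ _ (Hproj b Hb) (nzsupp b j Hb E0)) as HT. simpl in HT.
      rewrite HFb in HT. apply (good_sep th et F1); auto. }
  unfold mu_sum.
  rewrite (Series_ext _ (fun j => nu th et (thf j b) - nu th et (thf j a))).
  2:{ intros j. rewrite bracket_D. pose proof Hp as [Het _].
      pose proof (nu_D th et _ Het (Gda j)). pose proof (nu_D th et _ Het (Gdb j)). lra. }
  destruct (FS_sup _ _ Va) as [Na [Za Ea]]. destruct (FS_sup _ _ Vb) as [Nb [Zb Eb]].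
  rewrite (Series_fin _ (Nat.max Na Nb)).
  - rewrite psum_minus, <- Ea, <- Eb by lia. auto.
  - intros j Hj. rewrite Za, Zb by lia. ring.
Qed.

Lemma arch_nat M : exists n : nat, (0 < n)%nat /\ M < INR n.
Proof.
  destruct (archimed M) as [H1 _].
  exists (S (Z.to_nat (up M))). split; [lia|].
  rewrite S_INR. destruct (Z.le_gt_cases 0 (up M)).
  - rewrite INR_IZR_INZ, Z2Nat.id by auto. lra.
  - assert (IZR (up M) <= 0) by (apply IZR_le; lia). pose proof (pos_INR (Z.to_nat (up M))). lra.
Qed.


Lemma cell A B C D : Rabs (red (B - A)) < PI / 2 -> Rabs (red (D - B)) < PI / 2 ->
  Rabs (red (C - A)) < PI / 2 -> Rabs (red (D - C)) < PI / 2 ->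
  red (B - A) + red (D - B) = red (C - A) + red (D - C).
Proof.
  intros H1 H2 H3 H4. pose proof PI_RGT_0.
  assert (Z : Z2pi ((red (B - A) + red (D - B)) - (red (C - A) + red (D - C)))).
  { pose proof (red_Z (B - A)). pose proof (red_Z (D - B)). pose proof (red_Z (C - A)). pose proof (red_Z (D - C)).
    replace ((red (B - A) + red (D - B)) - (red (C - A) + red (D - C))) with
      (((C - A) - red (C - A)) + ((D - C) - red (D - C)) - ((B - A) - red (B - A)) - ((D - B) - red (D - B))) by ring.
    apply Z2pi_minus; [apply Z2pi_minus|]; auto. apply Z2pi_plus; auto. }
  apply Z2pi_small in Z. lra.
  apply Rabs_def2 in H1. apply Rabs_def2 in H2. apply Rabs_def2 in H3. apply Rabs_def2 in H4.
  apply Rabs_def1; lra.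
Qed.

Lemma discrete (P : nat -> nat -> R) (W0 W1 : nat -> R) n :
  (forall i k, (i < n)%nat -> (k <= n)%nat -> Rabs (red (P (S i) k - P i k)) < PI / 2) ->
  (forall i k, (i <= n)%nat -> (k < n)%nat -> Rabs (red (P i (S k) - P i k)) < PI / 2) ->
  (forall k, (k <= n)%nat -> P O k = 0) ->
  (forall k, (k <= n)%nat -> P n k = P n O) ->
  (forall i, (i <= n)%nat -> Z2pi (P i O - 2 * PI * W0 i)) ->
  (forall i, (i <= n)%nat -> Z2pi (P i n - 2 * PI * W1 i)) ->
  (forall i, (i < n)%nat -> Rabs (W0 (S i) - W0 i) < / 2) ->
  (forall i, (i < n)%nat -> Rabs (W1 (S i) - W1 i) < / 2) ->
  W0 n - W0 O = W1 n - W1 O.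
Proof.
  intros H1 H2 H3 H4 H5 H6 H7 H8. pose proof PI_RGT_0.
  set (Rs := fun k => psum (fun i => red (P (S i) k - P i k)) n).
  assert (Step : forall k, (k < n)%nat -> Rs k = Rs (S k)).
  { intros k Hk. unfold Rs.
    set (Cv := fun i => red (P i (S k) - P i k)).
    assert (E : psum (fun i => red (P (S i) k - P i k)) n - psum (fun i => red (P (S i) (S k) - P i (S k))) n
               = psum (fun i => -1 * (Cv (S i) - Cv i)) n).
    { rewrite <- psum_minus. apply psum_ext. intros i Hi.
      unfold Cv. pose proof (cell (P i k) (P (S i) k) (P i (S k)) (P (S i) (S k))
        (H1 i k Hi ltac:(lia)) (H2 (S i) k ltac:(lia) Hk) (H2 i k ltac:(lia) Hk) (H1 i (S k) Hi Hk)). lra. }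
    rewrite psum_scal, psum_tele in E. unfold Cv in E.
    rewrite (H3 (S k)), (H3 k), (H4 (S k)), (H4 k) in E by lia.
    replace (0 - 0) with 0 in E by ring. replace (P n O - P n O) with 0 in E by ring.
    rewrite red_zero in E. lra. }
  assert (All : forall k, (k <= n)%nat -> Rs k = Rs O).
  { induction k; intros Hk; auto. rewrite <- Step by lia. apply IHk; lia. }
  assert (R0 : Rs O = psum (fun i => 2 * PI * W0 (S i) - 2 * PI * W0 i) n).
  { unfold Rs. apply psum_ext. intros i Hi. apply red_small.
    - replace (P (S i) O - P i O - (2 * PI * W0 (S i) - 2 * PI * W0 i)) with
        ((P (S i) O - 2 * PI * W0 (S i)) - (P i O - 2 * PI * W0 i)) by ring.
      apply Z2pi_minus; [apply H5|apply H5]; lia.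
    - specialize (H7 i Hi). apply Rabs_def2 in H7. split; nra. }
  assert (Rn : Rs n = psum (fun i => 2 * PI * W1 (S i) - 2 * PI * W1 i) n).
  { unfold Rs. apply psum_ext. intros i Hi. apply red_small.
    - replace (P (S i) n - P i n - (2 * PI * W1 (S i) - 2 * PI * W1 i)) with
        ((P (S i) n - 2 * PI * W1 (S i)) - (P i n - 2 * PI * W1 i)) by ring.
      apply Z2pi_minus; [apply H6|apply H6]; lia.
    - specialize (H8 i Hi). apply Rabs_def2 in H8. split; nra. }
  rewrite (psum_tele (fun i => 2 * PI * W0 i)) in R0. rewrite (psum_tele (fun i => 2 * PI * W1 i)) in Rn. rewrite (All n) in Rn by lia. rewrite R0 in Rn.
  apply Rmult_eq_reg_l with (2 * PI); lra.
Qed.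


Lemma frac_bound n i : (0 < n)%nat -> (i <= n)%nat -> 0 <= INR i / INR n <= 1.
Proof.
  intros Hn Hi. assert (0 < INR n) by (apply lt_0_INR; auto).
  pose proof (pos_INR i). apply le_INR in Hi. split.
  - unfold Rdiv; apply Rmult_le_pos; [lra|left; apply Rinv_0_lt_compat; lra].
  - apply Rmult_le_reg_r with (INR n); auto. unfold Rdiv. rewrite Rmult_assoc, Rinv_l by lra. lra.
Qed.

Theorem mainTheorem8 (a b : R) (F : R -> R -> rigged T) (F1 : rigged T) :
  a < b ->
  (forall r t, a <= r <= b -> 0 <= t <= 1 -> in_S1 distT oneT (F r t)) ->
  rhom_cont distT a b F ->
  in_S1 distT oneT F1 ->
  (forall t, 0 <= t <= 1 -> is_base_rigged oneT (F a t)) ->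
  (forall t, 0 <= t <= 1 -> forall z, F b t z = F1 z) ->
  forall theta, 0 < theta < 2 * PI ->
  forall (St0 St1 : R -> rigged R) (th0 th1 : nat -> R -> R),
    mu_data a b (fun r => F r 0) St0 th0 ->
    mu_data a b (fun r => F r 1) St1 th1 ->
    mu_sum a b theta th0 = mu_sum a b theta th1.
Proof.
  intros Hab HF Hc HF1 Hbase Hb theta Hth St0 St1 th0 th1 Hm0 Hm1.
  pose proof PI_RGT_0 as Hpi.
  destruct (choose_eta theta F1 Hth HF1) as [et [Hp Hs]].
  assert (T0 : 0 <= 0 <= 1) by lra. assert (T1 : 0 <= 1 <= 1) by lra.
  rewrite (mu_eq theta et a b F F1 0 St0 th0 Hp Hs Hab (Hbase 0 T0) (Hb 0 T0) Hm0).
  rewrite (mu_eq theta et a b F F1 1 St1 th1 Hp Hs Hab (Hbase 1 T1) (Hb 1 T1) Hm1).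
  set (G := Gf theta et F). set (V0 := Vf theta et St0). set (V1 := Vf theta et St1).
  destruct (unif2 a b (fun r t r' t' => Rabs (red (G r t - G r' t')))) with (eps := PI / 2) as [d1 [Hd1 Hu1]].
  { intros. rewrite <- red_opp. f_equal. f_equal. ring. }
  { intros. replace (G r t - G r'' t'') with ((G r t - G r' t') + (G r' t' - G r'' t'')) by ring. apply red_tri. }
  { apply G_cont; auto. }
  { lra. }
  destruct Hm0 as [HS0 [Hc0 Hr0]]. destruct Hm1 as [HS1 [Hc1 Hr1]].
  destruct (unif2 a b (fun r t r' t' => Rabs (V0 r - V0 r'))) with (eps := / 2) as [d2 [Hd2 Hu2]].
  { intros. rewrite Rabs_minus_sym; auto. }
  { intros. replace (V0 r - V0 r'') with ((V0 r - V0 r') + (V0 r' - V0 r'')) by ring. apply Rabs_triang. }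
  { apply V_cont; auto. }
  { lra. }
  destruct (unif2 a b (fun r t r' t' => Rabs (V1 r - V1 r'))) with (eps := / 2) as [d3 [Hd3 Hu3]].
  { intros. rewrite Rabs_minus_sym; auto. }
  { intros. replace (V1 r - V1 r'') with ((V1 r - V1 r') + (V1 r' - V1 r'')) by ring. apply Rabs_triang. }
  { apply V_cont; auto. }
  { lra. }
  set (d := Rmin d1 (Rmin d2 d3)).
  assert (Hd : 0 < d) by (unfold d, Rmin; repeat destruct Rle_dec; lra).
  assert (Hdd : d <= d1 /\ d <= d2 /\ d <= d3).
  { unfold d. pose proof (Rmin_l d1 (Rmin d2 d3)). pose proof (Rmin_r d1 (Rmin d2 d3)).
    pose proof (Rmin_l d2 d3). pose proof (Rmin_r d2 d3). lra. }
  destruct (arch_nat (Rmax ((b - a) / d) (1 / d))) as [n [Hn Hnb]].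
  assert (HnR : 0 < INR n) by (apply lt_0_INR; auto).
  pose proof (Rmax_l ((b - a) / d) (1 / d)). pose proof (Rmax_r ((b - a) / d) (1 / d)).
  set (h := (b - a) / INR n).
  assert (Hh : 0 < h < d).
  { unfold h. split. unfold Rdiv; apply Rmult_lt_0_compat; [lra|apply Rinv_0_lt_compat; lra].
    apply Rmult_lt_reg_r with (INR n); auto. unfold Rdiv. rewrite Rmult_assoc, Rinv_l by lra.
    assert ((b - a) / d < INR n) by lra.
    apply Rmult_lt_reg_r with (/ d). apply Rinv_0_lt_compat; auto.
    replace ((b - a) * 1 * / d) with ((b - a) / d) by (unfold Rdiv; ring).
    replace (d * INR n * / d) with (INR n) by (field; lra). lra. }
  assert (Hk : 0 < 1 / INR n < d).
  { split. unfold Rdiv; apply Rmult_lt_0_compat; [lra|apply Rinv_0_lt_compat; lra].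
    apply Rmult_lt_reg_r with (INR n); auto. replace (1 / INR n * INR n) with 1 by (field; lra).
    assert (1 / d < INR n) by lra.
    apply Rmult_lt_reg_r with (/ d). apply Rinv_0_lt_compat; auto.
    replace (d * INR n * / d) with (INR n) by (field; lra). unfold Rdiv in H1. lra. }
  set (rr := fun i => a + INR i * h). set (tt := fun k => INR k / INR n).
  assert (Rr : forall i, (i <= n)%nat -> a <= rr i <= b).
  { intros i Hi. pose proof (frac_bound n i Hn Hi). unfold rr, h.
    replace (a + INR i * ((b - a) / INR n)) with (a + (b - a) * (INR i / INR n)) by (field; lra).
    split; nra. }
  assert (Tt : forall k, (k <= n)%nat -> 0 <= tt k <= 1) by (intros; apply frac_bound; auto).
  assert (Rs : forall i, rr (S i) - rr i = h) by (intros; unfold rr; rewrite S_INR; ring).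
  assert (Ts : forall k, tt (S k) - tt k = 1 / INR n) by (intros; unfold tt; rewrite S_INR; field; lra).
  assert (R0 : rr O = a) by (unfold rr; simpl; ring).
  assert (Rn : rr n = b) by (unfold rr, h; field; lra).
  assert (T00 : tt O = 0) by (unfold tt; simpl; unfold Rdiv; ring).
  assert (Tn : tt n = 1) by (unfold tt; field; lra).
  enough (Key : V0 (rr n) - V0 (rr O) = V1 (rr n) - V1 (rr O)) by (rewrite R0, Rn in Key; exact Key).
  apply (discrete (fun i k => G (rr i) (tt k)) (fun i => V0 (rr i)) (fun i => V1 (rr i)) n).
  - intros i k Hi Hk'. apply Hu1; auto; try (apply Rr; lia); try (apply Tt; lia).
    rewrite Rs, Rabs_pos_eq; lra. replace (tt k - tt k) with 0 by ring. rewrite Rabs_R0; lra.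
  - intros i k Hi Hk'. apply Hu1; auto; try (apply Rr; lia); try (apply Tt; lia).
    replace (rr i - rr i) with 0 by ring. rewrite Rabs_R0; lra. rewrite Ts, Rabs_pos_eq; lra.
  - intros k Hk'. rewrite R0. apply G_base; [auto | apply HF; [lra | apply Tt; auto] | apply Hbase, Tt; auto].
  - intros k Hk'. rewrite Rn, T00. apply G_same;
      [auto | apply HF; [lra | apply Tt; auto] | apply HF; [lra | lra] | ].
    intros z. rewrite Hb, Hb; auto.
  - intros i Hi. rewrite T00. apply GV_rel; [auto | apply HF; [apply Rr; auto | lra] | apply HS0, Rr; auto | apply Hr0, Rr; auto].
  - intros i Hi. rewrite Tn. apply GV_rel; [auto | apply HF; [apply Rr; auto | lra] | apply HS1, Rr; auto | apply Hr1, Rr; auto].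
  - intros i Hi. apply (Hu2 (rr (S i)) 0 (rr i) 0); auto; try (apply Rr; lia); try lra.
    rewrite Rs, Rabs_pos_eq; lra. rewrite Rminus_0_r, Rabs_R0; lra.
  - intros i Hi. apply (Hu3 (rr (S i)) 0 (rr i) 0); auto; try (apply Rr; lia); try lra.
    rewrite Rs, Rabs_pos_eq; lra. rewrite Rminus_0_r, Rabs_R0; lra.
Qed.
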